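(* Let $f \in \mathcal{C}^1(\mathbb{R},\mathbb{R})$ be such that $|\!|\!|f|\!|\!| < \infty$, let $\lambda \ge 1$, and let $\kappa \in (0,\frac12)$. Then, for every rough path $(X,\mathbb{X})$ on $S^1$ and every path $(Y,Y')$ controlled by $X$ for which the right-hand side below is finite, the bound $$\Bigl|\int_{S^1} f(\lambda x) Y(x)\,dX(x)\Bigr| \le C\Bigl(\lambda^{\kappa - \frac12} |Y(0)|\, \|X\|_{\frac12-\kappa} + \lambda^{2\kappa-1} \mathscr{K}^\kappa(Y,X)\Bigr)$$ holds uniformly for all $\lambda > 1$, with a constant $C$ depending only on $|\!|\!|f|\!|\!|$ (for the given $\kappa$).
   Context: $S^1$ is identified with $[0,2\pi)$. For $X\colon S^1\to\mathbb{R}$ and $\alpha\in(0,1]$, $\|X\|_\alpha=\sup_{x\ne y}|\delta X(x,y)|/|x-y|^\alpha$ with $\delta X(x,y)=X(y)-X(x)$; $\|X\|_{\mathcal{C}^\alpha}=\|X\|_\alpha+\|X\|_\infty$; for a function $\mathbb{X}$ of two variables, $\|\mathbb{X}\|_\alpha=\sup_{x\neq y}|\mathbb{X}(x,y)|/|x-y|^\alpha$. A (scalar) rough path is a pair $(X,\mathbb{X})$ with $X$ continuous and $\mathbb{X}$ a continuous function of two variables vanishing on the diagonal satisfying $\mathbb{X}(x,z)-\mathbb{X}(x,y)-\mathbb{X}(y,z)=\delta X(x,y)\,\delta X(y,z)$ (with the periodicity convention that two-variable functions on $S^1$ are evaluated with $x\in[0,2\pi)$, $y\in[x,x+2\pi)$).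 A pair $(Y,Y')$ is controlled by $X$ with remainder $R^Y(x,y)=\delta Y(x,y)-Y'(x)\,\delta X(x,y)$. The rough integral $\int Z\,dX$ of a controlled pair $(Z,Z')$ is the limit, as the mesh of the partition $\mathcal{P}$ of the integration interval tends to $0$, of $\sum_{[x,y]\in\mathcal{P}}\bigl(Z(x)\delta X(x,y)+Z'(x)\mathbb{X}(x,y)\bigr)$; here $Z(x)=f(\lambda x)Y(x)$ with derivative process $Z'(x)=f(\lambda x)Y'(x)$. Define $\mathscr{K}^\kappa(Y,X)=\|Y\|_{\frac12-\kappa}\|X\|_{\frac12-\kappa}+\|\mathbb{X}\|_{1-2\kappa}\|Y'\|_{\mathcal{C}^{3\kappa}}+\|R^Y\|_{\frac12+2\kappa}\|X\|_{\frac12-\kappa}$, and for $f\in\mathcal{C}^1$, $|\!|\!|f|\!|\!|=\sum_{n\in\mathbb{Z}}\sqrt{1+|n|}\sup_{0\le t\le1}(|f(n+t)|+|f'(n+t)|)$. *)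

(* Defs.v *)
From Stdlib Require Import Reals ZArith.
From Coquelicot Require Import Coquelicot.
Open Scope R_scope.

(* S^1 is identified with [0,2π); functions on S^1 are 2π-periodic functions R -> R. *)
Definition periodic (X : R -> R) : Prop := forall x, X (x + 2 * PI) = X x.

Definition delta (X : R -> R) (x y : R) : R := X y - X x.

(* Domain of two-variable functions on S^1: x ∈ [0,2π), y ∈ [x, x+2π). *)
Definition D2 (p : R * R) : Prop :=
  0 <= fst p < 2 * PI /\ fst p <= snd p < fst p + 2 * PI.

Definition holder (alpha : R) (X : R -> R) : Rbar :=
  Lub_Rbar (fun r => exists x y, 0 <= x < 2 * PI /\ 0 <= y < 2 * PI /\ x <> y /\
               r = Rabs (delta X x y) / Rpower (Rabs (x - y)) alpha).

Definition supnorm (X : R -> R) : Rbar :=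
  Lub_Rbar (fun r => exists x, 0 <= x < 2 * PI /\ r = Rabs (X x)).

Definition Cnorm (alpha : R) (X : R -> R) : Rbar :=
  Rbar_plus (holder alpha X) (supnorm X).

Definition holder2 (alpha : R) (XX : R -> R -> R) : Rbar :=
  Lub_Rbar (fun r => exists x y, D2 (x, y) /\ x <> y /\
               r = Rabs (XX x y) / Rpower (Rabs (x - y)) alpha).

(* (X,𝕏) is a (scalar) rough path on S^1. 𝕏 is a function on S^1 × S^1
   read through the periodicity convention, hence invariant under the
   simultaneous shift by 2π. *)
Definition rough_path (X : R -> R) (XX : R -> R -> R) : Prop :=
  periodic X /\ (forall x, continuous X x) /\
  (forall x y, XX (x + 2 * PI) (y + 2 * PI) = XX x y) /\
  (forall p, D2 p ->
     filterlim (fun q : R * R => XX (fst q) (snd q)) (within D2 (locally p))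
               (locally (XX (fst p) (snd p)))) /\
  (forall x, XX x x = 0) /\
  (forall x y z, x <= y -> y <= z -> z < x + 2 * PI ->
     XX x z - XX x y - XX y z = delta X x y * delta X y z).

Definition remainder (X Y Y' : R -> R) (x y : R) : R :=
  delta Y x y - Y' x * delta X x y.

Fixpoint rsum (g : nat -> R) (n : nat) : R :=
  match n with O => 0 | S m => rsum g m + g m end.

Definition partition_mesh (n : nat) (t : nat -> R) (d : R) : Prop :=
  (1 <= n)%nat /\ t O = 0 /\ t n = 2 * PI /\
  (forall i, (i < n)%nat -> t i < t (S i) /\ t (S i) - t i < d).

Definition is_rough_integral (X : R -> R) (XX : R -> R -> R) (Z Z' : R -> R)
    (I : R) : Prop :=
  forall eps, 0 < eps -> exists d, 0 < d /\
    forall n t, partition_mesh n t d ->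
      Rabs (rsum (fun i => Z (t i) * delta X (t i) (t (S i))
                           + Z' (t i) * XX (t i) (t (S i))) n - I) < eps.

Definition is_C1 (f : R -> R) : Prop :=
  forall x, ex_derive f x /\ continuous (Derive f) x.

Definition loc_sup (f : R -> R) (n : Z) : R :=
  real (Lub_Rbar (fun r => exists t, 0 <= t <= 1 /\
          r = Rabs (f (IZR n + t)) + Rabs (Derive f (IZR n + t)))).

(* |||f||| = Σ_{n∈Z} sqrt(1+|n|) loc_sup f n, as the sup of the symmetric
   partial sums (terms are nonnegative); value in Rbar. *)
Definition triple_norm (f : R -> R) : Rbar :=
  Lub_Rbar (fun s => exists N : nat,
     s = rsum (fun k => let n := (Z.of_nat k - Z.of_nat N)%Z in
                        sqrt (1 + Rabs (IZR n)) * loc_sup f n) (2 * N + 1)).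

Definition Kkappa (kappa : R) (X : R -> R) (XX : R -> R -> R) (Y Y' : R -> R) : R :=
  real (holder (1/2 - kappa) Y) * real (holder (1/2 - kappa) X)
  + real (holder2 (1 - 2 * kappa) XX) * real (Cnorm (3 * kappa) Y')
  + real (holder2 (1/2 + 2 * kappa) (remainder X Y Y')) * real (holder (1/2 - kappa) X).

(* Main.v *)
Require Import Defs.
From Stdlib Require Import Reals Lra Lia List.
From Coquelicot Require Import Coquelicot.
Open Scope R_scope.

Fixpoint Ssum (Xi : R -> R -> R) (a : R) (l : list R) : R :=
  match l with nil => 0 | x :: l' => Xi a x + Ssum Xi x l' end.
Fixpoint incr (a : R) (l : list R) (b : R) : Prop :=
  match l with nil => a = b | x :: l' => a < x /\ incr x l' b end.
Fixpoint gaps (d a : R) (l : list R) : Prop :=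
  match l with nil => True | x :: l' => x - a <= d /\ gaps d x l' end.
Definition dXi (Xi : R -> R -> R) (s u t : R) := Xi s u + Xi u t - Xi s t.

Lemma incr_le : forall l a b, incr a l b -> a <= b.
Proof.
  induction l as [|x l IH]; simpl; intros a b H.
  - subst; lra.
  - destruct H as [H1 H2]; specialize (IH _ _ H2); lra.
Qed.

Lemma incr_nil_eq : forall l a, incr a l a -> l = nil.
Proof.
  destruct l as [|x l]; simpl; intros a H; auto.
  destruct H as [H1 H2]; apply incr_le in H2; lra.
Qed.

Lemma remove_ex (Xi : R -> R -> R) : forall l m a x b c,
  length (x :: l) = m -> (2 <= m)%nat -> incr a (x :: l) b ->
  (b - x) + (b - a) <= INR (m - 1) * c ->
  exists l' p q r, length l' = (m - 1)%nat /\ incr a l' b /\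
    a <= p /\ p < q /\ q < r /\ r <= b /\ r - p <= c /\
    Ssum Xi a (x :: l) = Ssum Xi a l' + dXi Xi p q r.
Proof.
  induction l as [|y l IH]; intros m a x b c Hlen Hm Hinc Hc.
  - simpl in Hlen; lia.
  - simpl in Hinc. destruct Hinc as [Hax [Hxy Hinc]].
    assert (Hyb : y <= b) by (eapply incr_le; eauto).
    destruct (Rle_dec (y - a) c) as [Hle|Hgt].
    + exists (y :: l), a, x, y. repeat split; simpl; try lra.
      * simpl in Hlen; lia.
      * auto.
      * unfold dXi; ring.
    + destruct l as [|z l].
      * simpl in Hlen. subst m. simpl in Hinc. subst y.
        simpl in Hc. exfalso. lra.
      * assert (Hlen' : length (y :: z :: l) = (m - 1)%nat) by (simpl in *; lia).
        destruct (IH (m - 1)%nat x y b c Hlen') as [l' [p [q [r H]]]].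
        { simpl in Hlen; lia. }
        { simpl; auto. }
        { assert (INR (m - 1) = INR (m - 1 - 1) + 1).
          { rewrite <- S_INR. f_equal. simpl in Hlen; lia. }
          rewrite H, Rmult_plus_distr_r in Hc. apply Rnot_le_lt in Hgt. lra. }
        destruct H as [H1 [H2 [H3 [H4 [H5 [H6 [H7 H8]]]]]]].
        exists (x :: l'), p, q, r. repeat split; simpl; try lra.
        -- simpl in H1, Hlen |- *. lia.
        -- auto.
        -- simpl in H8. rewrite H8. ring.
Qed.

Lemma ln_le_xm1 : forall y, 0 < y -> ln y <= y - 1.
Proof. intros y Hy. pose proof (exp_ineq1_le (ln y)). rewrite exp_ln in H; lra. Qed.

Lemma key_ineq : forall q j, 0 < q -> 2 <= j ->
  q * Rpower j (-(q+1)) <= Rpower (j-1) (-q) - Rpower j (-q).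
Proof.
  intros q j Hq Hj. unfold Rpower.
  set (L := ln j). set (L1 := ln (j-1)).
  assert (E1 : exp (-(q+1) * L) = exp (-q * L) * / j).
  { replace (-(q+1)*L) with (-q*L + - L) by ring. rewrite exp_plus.
    unfold L. rewrite <- ln_Rinv by lra. rewrite exp_ln; [ring|].
    apply Rinv_0_lt_compat; lra. }
  assert (E2 : exp (-q * L1) = exp (-q * L) * exp (q * (L - L1))).
  { rewrite <- exp_plus. f_equal. ring. }
  assert (HL : / j <= L - L1).
  { pose proof (ln_le_xm1 ((j-1) * / j)) as H.
    assert (0 < (j-1) * / j) by (apply Rmult_lt_0_compat; [lra| apply Rinv_0_lt_compat; lra]).
    specialize (H H0). rewrite ln_mult in H by (try lra; apply Rinv_0_lt_compat; lra).
    rewrite ln_Rinv in H by lra. unfold L, L1.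
    replace ((j-1) * / j - 1) with (- / j) in H by (field; lra). lra. }
  rewrite E1, E2.
  pose proof (exp_ineq1_le (q * (L - L1))).
  pose proof (exp_pos (-q * L)).
  assert (q * / j <= q * (L - L1)) by (apply Rmult_le_compat_l; lra).
  nra.
Qed.

Definition Fc (th : R) (m : nat) : R :=
  match m with O | S O => 0
  | _ => 1 + (1 - Rpower (INR (m - 1)) (- (th - 1))) / (th - 1) end.

Lemma Rpower_1_base : forall x, Rpower 1 x = 1.
Proof. intros; unfold Rpower; rewrite ln_1, Rmult_0_r; apply exp_0. Qed.

Lemma Rpower_pos : forall x y, 0 < Rpower x y.
Proof. intros; unfold Rpower; apply exp_pos. Qed.

Lemma Fc_step : forall th m, 1 < th -> (1 <= m)%nat ->
  Fc th m + Rpower (INR m) (- th) <= Fc th (S m).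
Proof.
  intros th m Hth Hm. destruct m as [|m]; [lia|].
  destruct m as [|m].
  - simpl. rewrite !Rpower_1_base. replace (1 - 1) with 0 by ring. unfold Rdiv. lra.
  - unfold Fc. replace (S (S (S m)) - 1)%nat with (S (S m)) by lia.
    replace (S (S m) - 1)%nat with (S m) by lia.
    pose proof (key_ineq (th - 1) (INR (S (S m)))) as H.
    replace (INR (S (S m)) - 1) with (INR (S m)) in H by (rewrite (S_INR (S m)); ring).
    replace (- (th - 1 + 1)) with (- th) in H by ring.
    assert (HS : 2 <= INR (S (S m))) by (rewrite !S_INR; pose proof (pos_INR m); lra).
    specialize (H ltac:(lra) HS).
    assert (Rpower (INR (S (S m))) (- th) <= (Rpower (INR (S m)) (- (th - 1)) - Rpower (INR (S (S m))) (- (th - 1))) / (th - 1)).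
    { apply Rmult_le_reg_l with (th - 1); [lra|]. unfold Rdiv.
      replace ((th - 1) * ((Rpower (INR (S m)) (- (th - 1)) - Rpower (INR (S (S m))) (- (th - 1))) * / (th - 1))) with (Rpower (INR (S m)) (- (th - 1)) - Rpower (INR (S (S m))) (- (th - 1))) by (field; lra). lra. }
    unfold Rdiv in *. 
    replace ((1 - Rpower (INR (S (S m))) (- (th - 1))) * / (th - 1)) with
      ((1 - Rpower (INR (S m)) (- (th - 1))) * / (th - 1) + (Rpower (INR (S m)) (- (th - 1)) - Rpower (INR (S (S m))) (- (th - 1))) * / (th - 1)) by ring.
    lra.
Qed.

Lemma Fc_bound : forall th m, 1 < th -> Fc th m <= 1 + / (th - 1).
Proof.
  intros th m Hth. destruct m as [|[|m]]; simpl Fc.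
  - assert (0 < / (th-1)) by (apply Rinv_0_lt_compat; lra). lra.
  - assert (0 < / (th-1)) by (apply Rinv_0_lt_compat; lra). lra.
  - match goal with |- context [Rpower ?x ?y] => pose proof (Rpower_pos x y) end.
    assert (0 < / (th-1)) by (apply Rinv_0_lt_compat; lra).
    unfold Rdiv. rewrite Rmult_minus_distr_r, Rmult_1_l.
    match goal with |- context [Rpower ?x ?y * / (th - 1)] => assert (0 <= Rpower x y * / (th - 1)) by (apply Rmult_le_pos; lra) end.
    lra.
Qed.

Lemma Rpower_inv_base : forall x y, 0 < x -> Rpower (/ x) y = Rpower x (- y).
Proof. intros; unfold Rpower; rewrite ln_Rinv by auto; f_equal; ring. Qed.

Lemma maxineq (Xi : R -> R -> R) (th K a b : R) :
  1 < th -> 0 <= K -> a < b ->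
  (forall s u t, a <= s -> s < u -> u < t -> t <= b ->
     Rabs (dXi Xi s u t) <= K * Rpower (t - s) th) ->
  forall m l, length l = S m -> incr a l b ->
  Rabs (Ssum Xi a l - Xi a b) <= K * Rpower (2 * (b - a)) th * Fc th (S m).
Proof.
  intros Hth HK Hab H. induction m as [|m IH]; intros l Hlen Hinc.
  - destruct l as [|x [|y l]]; simpl in Hlen; try lia.
    simpl in Hinc. destruct Hinc as [_ Hx]. subst x. simpl.
    replace (Xi a b + 0 - Xi a b) with 0 by ring. rewrite Rabs_R0. simpl. lra.
  - destruct l as [|x l]; [simpl in Hlen; lia|].
    set (c := 2 * (b - a) * / INR (S m)).
    assert (HSm : 0 < INR (S m)) by (apply lt_0_INR; lia).
    assert (Hxa : a <= x) by (simpl in Hinc; lra).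
    assert (Hxb : x <= b) by (simpl in Hinc; destruct Hinc as [_ Hi]; eapply incr_le; eauto).
    destruct (remove_ex Xi l (S (S m)) a x b c Hlen ltac:(lia) Hinc) as
      [l' [p [q [r [H1 [H2 [H3 [H4 [H5 [H6 [H7 H8]]]]]]]]]]].
    { replace (S (S m) - 1)%nat with (S m) by lia. unfold c.
      replace (INR (S m) * (2 * (b - a) * / INR (S m))) with (2 * (b - a)) by (field; lra). lra. }
    replace (S (S m) - 1)%nat with (S m) in H1 by lia.
    specialize (IH l' H1 H2).
    rewrite H8.
    replace (Ssum Xi a l' + dXi Xi p q r - Xi a b) with ((Ssum Xi a l' - Xi a b) + dXi Xi p q r) by ring.
    eapply Rle_trans; [apply Rabs_triang|].
    assert (Hd : Rabs (dXi Xi p q r) <= K * Rpower (2 * (b - a)) th * Rpower (INR (S m)) (- th)).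
    { eapply Rle_trans; [apply H; lra|].
      rewrite Rmult_assoc. apply Rmult_le_compat_l; auto.
      rewrite <- Rpower_inv_base by lra. rewrite Rpower_mult_distr by (try apply Rinv_0_lt_compat; lra).
      apply Rle_Rpower_l; [lra|]. split; [lra|]. apply H7. }
    pose proof (Fc_step th (S m) Hth ltac:(lia)).
    assert (0 <= K * Rpower (2 * (b - a)) th) by (apply Rmult_le_pos; auto; left; apply Rpower_pos).
    assert (K * Rpower (2 * (b - a)) th * Fc th (S m) + K * Rpower (2 * (b - a)) th * Rpower (INR (S m)) (- th)
            <= K * Rpower (2 * (b - a)) th * Fc th (S (S m))).
    { rewrite <- Rmult_plus_distr_l. apply Rmult_le_compat_l; auto. }
    lra.
Qed.

Lemma maxineq' (Xi : R -> R -> R) (th K a b : R) :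
  1 < th -> 0 <= K -> a < b ->
  (forall s u t, a <= s -> s < u -> u < t -> t <= b ->
     Rabs (dXi Xi s u t) <= K * Rpower (t - s) th) ->
  forall l, incr a l b ->
  Rabs (Ssum Xi a l - Xi a b) <= K * Rpower (2 * (b - a)) th * (1 + / (th - 1)).
Proof.
  intros Hth HK Hab H l Hinc.
  destruct l as [|x l]. { simpl in Hinc; lra. }
  eapply Rle_trans; [apply (maxineq Xi th K a b Hth HK Hab H (length l)); auto|].
  apply Rmult_le_compat_l; [apply Rmult_le_pos; auto; left; apply Rpower_pos|].
  apply Fc_bound; auto.
Qed.

Lemma split_ex (Xi : R -> R -> R) (d : R) : forall l a b p,
  incr a l b -> gaps d a l -> a < p -> p < b ->
  exists l1 l2 e, incr a l1 p /\ incr p l2 b /\ gaps d p l2 /\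
    Ssum Xi a l = Ssum Xi a l1 + Ssum Xi p l2 + e /\
    (e = 0 \/ exists s t, a <= s /\ s < p /\ p < t /\ t <= b /\ t - s <= d /\
                        e = - dXi Xi s p t).
Proof.
  induction l as [|x l IH]; intros a b p Hinc Hg Hap Hpb.
  - simpl in Hinc; lra.
  - simpl in Hinc, Hg. destruct Hinc as [Hax Hinc]. destruct Hg as [Hd Hg].
    assert (Hxb : x <= b) by (eapply incr_le; eauto).
    destruct (Rtotal_order x p) as [Hxp|[Hxp|Hxp]].
    + destruct (IH x b p Hinc Hg Hxp Hpb) as [l1 [l2 [e [H1 [H2 [H3 [H4 H5]]]]]]].
      exists (x :: l1), l2, e. repeat split; auto.
      * simpl. rewrite H4. ring.
      * destruct H5 as [H5|[s [t H5]]]; [left; auto| right; exists s, t; intuition lra].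
    + subst x. exists (p :: nil), l, 0.
      split; [simpl; split; auto|]. split; auto. split; auto. split; [simpl; ring| left; auto].
    + exists (p :: nil), (x :: l), (Xi a x - Xi a p - Xi p x).
      split; [simpl; split; auto|]. split; [simpl; split; auto|].
      split; [simpl; split; auto; lra|]. split; [simpl; ring|].
      right. exists a, x. unfold dXi. repeat split; try lra.
Qed.

Lemma rsum_shift : forall g n, rsum g (S n) = g O + rsum (fun i => g (S i)) n.
Proof.
  intros g n; induction n as [|n IH]; simpl in *. ring.
  rewrite IH. ring.
Qed.

Lemma rsum_ext : forall g h n, (forall i, (i < n)%nat -> g i = h i) -> rsum g n = rsum h n.
Proof.
  intros g h n; induction n as [|n IH]; intros H; simpl; auto.
  rewrite IH by (intros; apply H; lia). rewrite H by lia. auto.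
Qed.

Lemma c_incr : forall (c : nat -> R) k M, (forall i, (k <= i < k + M)%nat -> c i < c (S i)) ->
  forall j, (1 <= j <= M)%nat -> c k < c (k + j)%nat.
Proof.
  intros c k M H j Hj. induction j as [|j IH]; [lia|].
  destruct j as [|j].
  - replace (k + 1)%nat with (S k) by lia. apply H; lia.
  - eapply Rlt_trans; [apply IH; lia|]. replace (k + S (S j))%nat with (S (k + S j)) by lia.
    apply H; lia.
Qed.

Lemma blocks (Xi : R -> R -> R) (d eta : R) (Eb : nat -> R) (c : nat -> R) :
  0 <= eta ->
  forall M k l, (forall i, (k <= i < k + M)%nat -> c i < c (S i)) ->
  (forall i, (k <= i < k + M)%nat -> forall l', incr (c i) l' (c (S i)) ->
      Rabs (Ssum Xi (c i) l' - Xi (c i) (c (S i))) <= Eb i) ->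
  (forall s u t, c k <= s -> s < u -> u < t -> t <= c (k + M)%nat -> t - s <= d ->
      Rabs (dXi Xi s u t) <= eta) ->
  incr (c k) l (c (k + M)%nat) -> gaps d (c k) l ->
  Rabs (Ssum Xi (c k) l - rsum (fun i => Xi (c (k + i)%nat) (c (S (k + i)))) M)
    <= INR M * eta + rsum (fun i => Eb (k + i)%nat) M.
Proof.
  intros Heta M. induction M as [|M IH]; intros k l Hc HE Heta' Hinc Hg.
  - rewrite Nat.add_0_r in Hinc. apply incr_nil_eq in Hinc. subst l. simpl.
    rewrite Rminus_0_r, Rabs_R0. lra.
  - destruct M as [|M].
    + simpl. replace (k + 0)%nat with k by lia.
      replace (k + 1)%nat with (S k) in Hinc by lia.
      specialize (HE k ltac:(lia) l Hinc).
      replace (Ssum Xi (c k) l - (0 + Xi (c k) (c (S k)))) with (Ssum Xi (c k) l - Xi (c k) (c (S k))) by ring.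
      lra.
    + assert (Hk1 : c k < c (S k)) by (apply Hc; lia).
      assert (Hk2 : c (S k) < c (k + S (S M))%nat).
      { replace (k + S (S M))%nat with (S k + S M)%nat by lia.
        apply (c_incr c (S k) (S M)); [intros; apply Hc; lia| lia]. }
      destruct (split_ex Xi d l (c k) (c (k + S (S M))%nat) (c (S k)) Hinc Hg Hk1 Hk2)
        as [l1 [l2 [e [H1 [H2 [H3 [H4 H5]]]]]]].
      replace (k + S (S M))%nat with (S k + S M)%nat in H2 by lia.
      assert (IH' := IH (S k) l2).
      specialize (IH' ltac:(intros i Hi; apply Hc; lia)).
      specialize (IH' ltac:(intros i Hi; apply HE; lia)).
      specialize (IH' ltac:(intros s u t Hs Hsu Hut Ht Hd; apply Heta'; try lra;
         replace (k + S (S M))%nat with (S k + S M)%nat by lia; auto) H2 H3).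
      assert (He : Rabs e <= eta).
      { destruct H5 as [H5|[s [t [Hs1 [Hs2 [Hs3 [Hs4 [Hs5 Hs6]]]]]]]].
        - subst; rewrite Rabs_R0; auto.
        - subst e. rewrite Rabs_Ropp. apply Heta'; lra. }
      assert (HB := HE k ltac:(lia) l1 H1).
      rewrite H4, rsum_shift, (rsum_shift (fun i => Eb (k + i)%nat)).
      rewrite (rsum_ext (fun i => Xi (c (k + S i)%nat) (c (S (k + S i)))) (fun i => Xi (c (S k + i)%nat) (c (S (S k + i)))))
        by (intros; f_equal; f_equal; lia).
      rewrite (rsum_ext (fun i => Eb (k + S i)%nat) (fun i => Eb (S k + i)%nat)) by (intros; f_equal; lia).
      replace (k + 0)%nat with k by lia.
      rewrite (S_INR (S M)).
      match goal with |- Rabs (?A + ?B + e - (?C + ?D)) <= _ =>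
        replace (A + B + e - (C + D)) with ((A - C) + (B - D) + e) by ring end.
      eapply Rle_trans; [apply Rabs_triang|].
      eapply Rle_trans; [apply Rplus_le_compat_r; apply Rabs_triang|].
      lra.
Qed.

Lemma cont_eps : forall f x, continuous f x -> forall eps, 0 < eps ->
  exists d, 0 < d /\ forall y, Rabs (y - x) < d -> Rabs (f y - f x) < eps.
Proof.
  intros f x Hc eps He. apply continuity_pt_filterlim in Hc.
  destruct (Hc eps He) as [d [Hd H]]. exists d; split; auto.
  intros y Hy. destruct (Req_dec y x) as [->|Hne].
  - rewrite Rminus_diag, Rabs_R0; auto.
  - apply (H y). split. split; [exact I| auto]. simpl. unfold R_dist. auto.
Qed.

Lemma lub_ub : forall E r, is_finite (Lub_Rbar E) -> E r -> r <= real (Lub_Rbar E).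
Proof.
  intros E r Hf Hr. destruct (Lub_Rbar_correct E) as [Hub _].
  specialize (Hub r Hr). rewrite <- Hf in Hub. simpl in Hub. auto.
Qed.

Lemma Rpower_pos' : forall x y, 0 < Rpower x y.
Proof. intros; unfold Rpower; apply exp_pos. Qed.

Lemma Rpower_0_base : forall y, Rpower 0 y = 1.
Proof.
  intros; unfold Rpower. replace (ln 0) with 0. rewrite Rmult_0_r; apply exp_0.
  unfold ln; destruct (Rlt_dec 0 0) as [r|r]; [exfalso; apply (Rlt_irrefl 0); exact r|auto].
Qed.

Lemma twoPI_gt1 : 1 < 2 * PI.
Proof. pose proof PI2_3_2. lra. Qed.

Lemma holder_nonneg : forall al X, is_finite (holder al X) -> 0 <= real (holder al X).
Proof.
  intros al X Hf. eapply Rle_trans; [|apply lub_ub; [exact Hf|]].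
  2:{ exists 0, 1. pose proof twoPI_gt1. repeat split; try lra; try reflexivity. }
  unfold Rdiv. apply Rmult_le_pos; [apply Rabs_pos| left; apply Rinv_0_lt_compat; apply Rpower_pos'].
Qed.

Lemma holder_bd : forall al X x y, is_finite (holder al X) ->
  0 <= x < 2 * PI -> 0 <= y < 2 * PI ->
  Rabs (delta X x y) <= real (holder al X) * Rpower (Rabs (x - y)) al.
Proof.
  intros al X x y Hf Hx Hy. destruct (Req_dec x y) as [->|Hne].
  - unfold delta. rewrite Rminus_diag, Rabs_R0, Rminus_diag, Rabs_R0, Rpower_0_base.
    rewrite Rmult_1_r. apply holder_nonneg; auto.
  - assert (H := lub_ub _ (Rabs (delta X x y) / Rpower (Rabs (x - y)) al) Hf).
    fold (holder al X) in H. 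
    assert (Hp := Rpower_pos' (Rabs (x - y)) al).
    assert (Rabs (delta X x y) / Rpower (Rabs (x - y)) al <= real (holder al X)).
    { apply H. exists x, y. repeat split; auto; lra. }
    apply Rmult_le_reg_r with (/ Rpower (Rabs (x - y)) al); [apply Rinv_0_lt_compat; auto|].
    rewrite Rmult_assoc, Rinv_r by lra. rewrite Rmult_1_r. auto.
Qed.

Lemma holder2_nonneg : forall al F, is_finite (holder2 al F) -> 0 <= real (holder2 al F).
Proof.
  intros al F Hf. eapply Rle_trans; [|apply lub_ub; [exact Hf|]].
  2:{ exists 0, 1. pose proof twoPI_gt1. unfold D2; simpl. repeat split; try lra; try reflexivity. }
  unfold Rdiv. apply Rmult_le_pos; [apply Rabs_pos| left; apply Rinv_0_lt_compat; apply Rpower_pos'].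
Qed.

Lemma holder2_bd : forall al F x y, is_finite (holder2 al F) ->
  0 <= x < 2 * PI -> x < y -> y < x + 2 * PI ->
  Rabs (F x y) <= real (holder2 al F) * Rpower (y - x) al.
Proof.
  intros al F x y Hf Hx Hxy Hy.
  assert (H := lub_ub _ (Rabs (F x y) / Rpower (Rabs (x - y)) al) Hf).
  fold (holder2 al F) in H.
  assert (Hp := Rpower_pos' (Rabs (x - y)) al).
  assert (Rabs (F x y) / Rpower (Rabs (x - y)) al <= real (holder2 al F)).
  { apply H. exists x, y. unfold D2; simpl. repeat split; auto; lra. }
  replace (y - x) with (Rabs (x - y)) by (rewrite Rabs_left; lra).
  apply Rmult_le_reg_r with (/ Rpower (Rabs (x - y)) al); [apply Rinv_0_lt_compat; auto|].
  rewrite Rmult_assoc, Rinv_r by lra. rewrite Rmult_1_r. auto.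
Qed.

Lemma supnorm_bd : forall Y x, is_finite (supnorm Y) -> 0 <= x < 2 * PI ->
  Rabs (Y x) <= real (supnorm Y).
Proof. intros Y x Hf Hx. apply lub_ub; auto. exists x; auto. Qed.

Lemma Cnorm_split : forall al Y, is_finite (Cnorm al Y) ->
  is_finite (holder al Y) /\ is_finite (supnorm Y) /\
  real (Cnorm al Y) = real (holder al Y) + real (supnorm Y).
Proof.
  intros al Y Hf. unfold Cnorm in *.
  assert (Hh : Rbar_le (Finite (Rabs (delta Y 0 1) / Rpower (Rabs (0 - 1)) al)) (holder al Y)).
  { destruct (Lub_Rbar_correct (fun r => exists x y, 0 <= x < 2 * PI /\ 0 <= y < 2 * PI /\ x <> y /\
               r = Rabs (delta Y x y) / Rpower (Rabs (x - y)) al)) as [Hub _].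
    apply Hub. exists 0, 1. pose proof twoPI_gt1. repeat split; try lra. }
  assert (Hs : Rbar_le (Finite (Rabs (Y 0))) (supnorm Y)).
  { destruct (Lub_Rbar_correct (fun r => exists x, 0 <= x < 2 * PI /\ r = Rabs (Y x))) as [Hub _].
    apply Hub. exists 0. pose proof twoPI_gt1. repeat split; try lra. }
  destruct (holder al Y) as [h| |]; destruct (supnorm Y) as [s| |]; simpl in *;
    try contradiction; try discriminate; try (unfold is_finite in Hf; simpl in Hf; discriminate).
  repeat split; reflexivity.
Qed.

Lemma holder_2pi : forall al X, 0 <= al -> is_finite (holder al X) ->
  (forall x, continuous X x) -> forall x, 0 <= x < 2 * PI ->
  Rabs (X (2 * PI) - X x) <= real (holder al X) * Rpower (2 * PI - x) al.
Proof.
  intros al X Hal Hf Hc x Hx. apply Rle_plus_epsilon. intros eps He.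
  destruct (cont_eps X (2 * PI) (Hc _) eps He) as [d [Hd H]].
  set (y := 2 * PI - Rmin (d / 2) ((2 * PI - x) / 2)).
  assert (Hm1 : Rmin (d / 2) ((2 * PI - x) / 2) <= d / 2) by apply Rmin_l.
  assert (Hm2 : Rmin (d / 2) ((2 * PI - x) / 2) <= (2 * PI - x) / 2) by apply Rmin_r.
  assert (Hm3 : 0 < Rmin (d / 2) ((2 * PI - x) / 2)) by (apply Rmin_glb_lt; lra).
  assert (Hy1 : x < y) by (unfold y; lra).
  assert (Hy2 : y < 2 * PI) by (unfold y; lra).
  assert (Hyd : Rabs (y - 2 * PI) < d) by (unfold y; rewrite Rabs_left; lra).
  specialize (H y Hyd).
  assert (Hb := holder_bd al X x y Hf Hx ltac:(lra)). unfold delta in Hb.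
  rewrite (Rabs_left (x - y)) in Hb by lra.
  assert (Rpower (- (x - y)) al <= Rpower (2 * PI - x) al) by (apply Rle_Rpower_l; [lra| split; lra]).
  assert (0 <= real (holder al X)) by (apply holder_nonneg; auto).
  assert (real (holder al X) * Rpower (- (x - y)) al <= real (holder al X) * Rpower (2 * PI - x) al)
    by (apply Rmult_le_compat_l; auto).
  replace (X (2 * PI) - X x) with ((X y - X x) - (X y - X (2 * PI))) by ring.
  eapply Rle_trans; [apply Rabs_triang|]. rewrite Rabs_Ropp. lra.
Qed.

Lemma holder_closed : forall al X, 0 <= al -> is_finite (holder al X) ->
  (forall x, continuous X x) -> forall x y, 0 <= x <= 2 * PI -> 0 <= y <= 2 * PI ->
  Rabs (X y - X x) <= real (holder al X) * Rpower (Rabs (y - x)) al.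
Proof.
  intros al X Hal Hf Hc x y Hx Hy.
  assert (H0 := holder_nonneg al X Hf).
  destruct (Req_dec x (2 * PI)) as [Ex|Ex]; destruct (Req_dec y (2 * PI)) as [Ey|Ey].
  - subst. rewrite !Rminus_diag, Rabs_R0, Rpower_0_base. lra.
  - subst x. rewrite <- (Rabs_Ropp (X y - X (2 * PI))), Ropp_minus_distr, (Rabs_left (y - 2 * PI)) by lra.
    replace (- (y - 2 * PI)) with (2 * PI - y) by ring. apply holder_2pi; auto; lra.
  - subst y. rewrite (Rabs_right (2 * PI - x)) by lra. apply holder_2pi; auto; lra.
  - pose proof (holder_bd al X x y Hf ltac:(lra) ltac:(lra)). unfold delta in H.
    rewrite <- (Rabs_Ropp (y - x)), Ropp_minus_distr. auto.
Qed.

Lemma f_lip : forall f a b A, is_C1 f -> a <= b ->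
  (forall z, a <= z <= b -> Rabs (Derive f z) <= A) -> Rabs (f b - f a) <= A * (b - a).
Proof.
  intros f a b A Hf Hab HA.
  destruct (MVT_gen f a b (Derive f)) as [c [Hc Hm]].
  - intros x _. apply Derive_correct. apply Hf.
  - intros x _. apply continuity_pt_filterlim. apply (@ex_derive_continuous R_AbsRing R_NormedModule). apply Hf.
  - rewrite Hm, Rabs_mult, (Rabs_right (b - a)) by lra.
    rewrite Rmin_left, Rmax_right in Hc by lra.
    apply Rmult_le_compat_r; [lra|]. apply HA; auto.
Qed.

Lemma g_cont : forall f z, is_C1 f ->
  continuity_pt (fun z => Rabs (f z) + Rabs (Derive f z)) z.
Proof.
  intros f z Hf. apply continuity_pt_filterlim.
  apply (continuous_plus (fun z => Rabs (f z)) (fun z => Rabs (Derive f z))).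
  - apply continuous_Rabs_comp. apply (@ex_derive_continuous R_AbsRing R_NormedModule). apply Hf.
  - apply continuous_Rabs_comp. apply Hf.
Qed.

Lemma loc_sup_bd : forall f n, is_C1 f -> forall t, 0 <= t <= 1 ->
  Rabs (f (IZR n + t)) + Rabs (Derive f (IZR n + t)) <= loc_sup f n.
Proof.
  intros f n Hf t Ht. unfold loc_sup.
  set (E := fun r => exists t, 0 <= t <= 1 /\
          r = Rabs (f (IZR n + t)) + Rabs (Derive f (IZR n + t))).
  destruct (continuity_ab_maj (fun t => Rabs (f (IZR n + t)) + Rabs (Derive f (IZR n + t))) 0 1)
    as [Mx [HM _]]; [lra| |].
  { intros c _. apply (continuity_pt_comp (fun t => IZR n + t) (fun z => Rabs (f z) + Rabs (Derive f z))).
    - apply continuity_pt_plus; [apply continuity_pt_const; intros ? ?; auto| apply derivable_continuous_pt, derivable_pt_id].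
    - apply g_cont; auto. }
  destruct (Lub_Rbar_correct E) as [Hub Hlub].
  assert (H1 : Rbar_le (Rabs (f (IZR n + t)) + Rabs (Derive f (IZR n + t))) (Lub_Rbar E)).
  { apply Hub. exists t; auto. }
  assert (H2 : Rbar_le (Lub_Rbar E) (Rabs (f (IZR n + Mx)) + Rabs (Derive f (IZR n + Mx)))).
  { apply Hlub. intros r [t' [Ht' ->]]. simpl. apply HM; auto. }
  destruct (Lub_Rbar E) as [r| |]; simpl in *; tauto.
Qed.

Lemma loc_sup_nonneg : forall f n, is_C1 f -> 0 <= loc_sup f n.
Proof.
  intros f n Hf. eapply Rle_trans; [|apply (loc_sup_bd f n Hf 0); lra].
  pose proof (Rabs_pos (f (IZR n + 0))). pose proof (Rabs_pos (Derive f (IZR n + 0))). lra.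
Qed.

Lemma rsum_app : forall g a b, rsum g (a + b) = rsum g a + rsum (fun i => g (a + i)%nat) b.
Proof.
  intros g a b. induction b as [|b IH]; simpl.
  - rewrite Nat.add_0_r. ring.
  - rewrite Nat.add_succ_r. simpl. rewrite IH. ring.
Qed.

Lemma rsum_nonneg : forall g n, (forall i, (i < n)%nat -> 0 <= g i) -> 0 <= rsum g n.
Proof.
  intros g n H. induction n as [|n IH]; simpl; [lra|].
  pose proof (H n ltac:(lia)). assert (0 <= rsum g n) by (apply IH; intros; apply H; lia). lra.
Qed.

Lemma rsum_le : forall g h n, (forall i, (i < n)%nat -> g i <= h i) -> rsum g n <= rsum h n.
Proof.
  intros g h n H. induction n as [|n IH]; simpl; [lra|].
  pose proof (H n ltac:(lia)). assert (rsum g n <= rsum h n) by (apply IH; intros; apply H; lia). lra.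
Qed.

Lemma tn_bd : forall f, is_C1 f -> is_finite (triple_norm f) -> forall M,
  rsum (fun n => sqrt (1 + INR n) * loc_sup f (Z.of_nat n)) M <= real (triple_norm f).
Proof.
  intros f Hf Hfin M. unfold triple_norm in *.
  eapply Rle_trans; [|apply lub_ub; [exact Hfin| exists M; reflexivity]].
  set (g := fun k : nat => let n := (Z.of_nat k - Z.of_nat M)%Z in sqrt (1 + Rabs (IZR n)) * loc_sup f n).
  assert (Hg : forall k, 0 <= g k).
  { intros k. unfold g. apply Rmult_le_pos; [apply sqrt_pos| apply loc_sup_nonneg; auto]. }
  replace (2 * M + 1)%nat with (M + (M + 1))%nat by lia.
  rewrite rsum_app. rewrite Nat.add_1_r. simpl rsum at 2.
  assert (0 <= rsum g M) by (apply rsum_nonneg; auto).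
  pose proof (Hg (M + M)%nat).
  assert (rsum (fun n => sqrt (1 + INR n) * loc_sup f (Z.of_nat n)) M = rsum (fun i => g (M + i)%nat) M).
  { apply rsum_ext. intros i _. unfold g.
    replace (Z.of_nat (M + i) - Z.of_nat M)%Z with (Z.of_nat i) by lia.
    rewrite <- INR_IZR_INZ, Rabs_right by (apply Rle_ge, pos_INR). auto. }
  change (rsum (fun i : nat => g (M + i)%nat) (S M)) with (rsum (fun i : nat => g (M + i)%nat) M + g (M + M)%nat). lra.
Qed.

Lemma pow_split : forall x l e th, 0 < x -> x <= l -> th <= e ->
  Rpower x e <= Rpower x th * Rpower l (e - th).
Proof.
  intros x l e th Hx Hl He.
  replace e with (th + (e - th)) at 1 by ring. rewrite Rpower_plus.
  apply Rmult_le_compat_l; [left; apply Rpower_pos'|].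
  apply Rle_Rpower_l; [lra| split; lra].
Qed.

Lemma pow_prod : forall a b p q, 0 < a -> 0 < b -> 0 <= p -> 0 <= q ->
  Rpower a p * Rpower b q <= Rpower (a + b) (p + q).
Proof.
  intros a b p q Ha Hb Hp Hq. rewrite Rpower_plus.
  apply Rmult_le_compat; try (left; apply Rpower_pos'); apply Rle_Rpower_l; try lra.
Qed.

Definition XiF (lam : R) (f X : R -> R) (XX : R -> R -> R) (Y Y' : R -> R) (s t : R) : R :=
  (f (lam * s) * Y s) * delta X s t + (f (lam * s) * Y' s) * XX s t.

Lemma dXi_formula : forall lam f X XX Y Y' s u t, rough_path X XX ->
  s <= u -> u <= t -> t < s + 2 * PI ->
  dXi (XiF lam f X XX Y Y') s u t =
   (f (lam * s) * remainder X Y Y' s u + (f (lam * u) - f (lam * s)) * Y u) * delta X u t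
   + (f (lam * u) * (Y' u - Y' s) + (f (lam * u) - f (lam * s)) * Y' s) * XX u t.
Proof.
  intros lam f X XX Y Y' s u t HR Hsu Hut Hts.
  destruct HR as [_ [_ [_ [_ [_ Hchen]]]]].
  specialize (Hchen s u t Hsu Hut Hts).
  unfold dXi, XiF, remainder.
  replace (XX s t) with (XX s u + XX u t + delta X s u * delta X u t) by lra.
  unfold delta. ring.
Qed.

Lemma abs_mult_le : forall a b a' b', Rabs a <= a' -> Rabs b <= b' -> Rabs (a * b) <= a' * b'.
Proof.
  intros. rewrite Rabs_mult. apply Rmult_le_compat; auto; apply Rabs_pos.
Qed.

Lemma dXi_bd : forall kappa lam f X XX Y Y' HX HXX HR HY1 N1 A B s u t,
  0 < kappa < 1/2 -> 0 < lam -> is_C1 f -> rough_path X XX ->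
  (forall x y, 0 <= x <= 2 * PI -> 0 <= y <= 2 * PI ->
     Rabs (X y - X x) <= HX * Rpower (Rabs (y - x)) (1/2 - kappa)) ->
  (forall x y, 0 <= x < 2 * PI -> x < y -> y < x + 2 * PI ->
     Rabs (XX x y) <= HXX * Rpower (y - x) (1 - 2 * kappa)) ->
  (forall x y, 0 <= x < 2 * PI -> x < y -> y < x + 2 * PI ->
     Rabs (remainder X Y Y' x y) <= HR * Rpower (y - x) (1/2 + 2 * kappa)) ->
  (forall x y, 0 <= x < 2 * PI -> 0 <= y < 2 * PI ->
     Rabs (delta Y' x y) <= HY1 * Rpower (Rabs (x - y)) (3 * kappa)) ->
  (forall x, 0 <= x < 2 * PI -> Rabs (Y' x) <= N1) ->
  0 <= HX -> 0 <= HXX -> 0 <= HR -> 0 <= HY1 ->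
  0 <= s -> s < u -> u < t -> t <= 2 * PI -> t - s <= 1 ->
  (forall z, s <= z <= t -> Rabs (f (lam * z)) <= A /\ Rabs (Derive f (lam * z)) <= A) ->
  Rabs (Y u) <= B ->
  Rabs (dXi (XiF lam f X XX Y Y') s u t) <=
    A * (HR * HX * Rpower (t - s) ((1/2 + 2 * kappa) + (1/2 - kappa))
         + lam * B * HX * Rpower (t - s) (1 + (1/2 - kappa))
         + HY1 * HXX * Rpower (t - s) (3 * kappa + (1 - 2 * kappa))
         + lam * N1 * HXX * Rpower (t - s) (1 + (1 - 2 * kappa))).
Proof.
  intros kappa lam f X XX Y Y' HX HXX HR HY1 N1 A B s u t Hk Hlam Hf Hrp hX hXX hR hY1 hN
    HX0 HXX0 HR0 HY10 Hs Hsu Hut Ht Hts HA HB.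
  assert (HPI := twoPI_gt1).
  rewrite dXi_formula by (auto; lra).
  assert (HA0 : 0 <= A) by (pose proof (Rabs_pos (f (lam * s))); destruct (HA s ltac:(lra)); lra).
  assert (HB0 : 0 <= B) by (pose proof (Rabs_pos (Y u)); lra).
  assert (HN0 : 0 <= N1) by (pose proof (Rabs_pos (Y' s)); pose proof (hN s ltac:(lra)); lra).
  assert (Hlip : Rabs (f (lam * u) - f (lam * s)) <= A * lam * (u - s)).
  { replace (A * lam * (u - s)) with (A * (lam * u - lam * s)) by ring.
    apply f_lip; auto. { apply Rmult_le_compat_l; lra. }
    intros z Hz. replace z with (lam * (z / lam)) by (field; lra).
    apply HA. split.
    - apply Rmult_le_reg_l with lam; auto. replace (lam * (z / lam)) with z by (field; lra). lra.
    - apply Rmult_le_reg_l with lam; auto. replace (lam * (z / lam)) with z by (field; lra).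
      assert (lam * u <= lam * t) by (apply Rmult_le_compat_l; lra). lra. }
  assert (HfS : Rabs (f (lam * s)) <= A) by (apply HA; lra).
  assert (HfU : Rabs (f (lam * u)) <= A) by (apply HA; lra).
  assert (H1 : Rabs (f (lam * s) * remainder X Y Y' s u) <= A * (HR * Rpower (u - s) (1/2 + 2 * kappa))).
  { apply abs_mult_le; auto. apply hR; lra. }
  assert (H2 : Rabs ((f (lam * u) - f (lam * s)) * Y u) <= A * lam * (u - s) * B).
  { apply abs_mult_le; auto. }
  assert (H3 : Rabs (delta X u t) <= HX * Rpower (t - u) (1/2 - kappa)).
  { unfold delta. rewrite <- (Rabs_right (t - u)) by lra. apply hX; lra. }
  assert (H4 : Rabs (f (lam * u) * (Y' u - Y' s)) <= A * (HY1 * Rpower (u - s) (3 * kappa))).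
  { apply abs_mult_le; auto. rewrite <- (Rabs_right (u - s)) by lra.
    rewrite <- Rabs_Ropp, Ropp_minus_distr. apply hY1; lra. }
  assert (H5 : Rabs ((f (lam * u) - f (lam * s)) * Y' s) <= A * lam * (u - s) * N1).
  { apply abs_mult_le; auto. apply hN; lra. }
  assert (H6 : Rabs (XX u t) <= HXX * Rpower (t - u) (1 - 2 * kappa)).
  { apply hXX; lra. }
  assert (P1 : Rpower (u - s) (1/2 + 2 * kappa) * Rpower (t - u) (1/2 - kappa) <= Rpower (t - s) ((1/2 + 2 * kappa) + (1/2 - kappa))).
  { replace (t - s) with ((u - s) + (t - u)) by ring. apply pow_prod; lra. }
  assert (P2 : (u - s) * Rpower (t - u) (1/2 - kappa) <= Rpower (t - s) (1 + (1/2 - kappa))).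
  { replace (t - s) with ((u - s) + (t - u)) by ring. rewrite <- (Rpower_1 (u - s)) at 1 by lra. apply pow_prod; lra. }
  assert (P3 : Rpower (u - s) (3 * kappa) * Rpower (t - u) (1 - 2 * kappa) <= Rpower (t - s) (3 * kappa + (1 - 2 * kappa))).
  { replace (t - s) with ((u - s) + (t - u)) by ring. apply pow_prod; lra. }
  assert (P4 : (u - s) * Rpower (t - u) (1 - 2 * kappa) <= Rpower (t - s) (1 + (1 - 2 * kappa))).
  { replace (t - s) with ((u - s) + (t - u)) by ring. rewrite <- (Rpower_1 (u - s)) at 1 by lra. apply pow_prod; lra. }
  eapply Rle_trans; [apply Rabs_triang|].
  eapply Rle_trans; [apply Rplus_le_compat; apply abs_mult_le;
    [eapply Rle_trans; [apply Rabs_triang| apply Rplus_le_compat; [exact H1| exact H2]]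
    | exact H3
    | eapply Rle_trans; [apply Rabs_triang| apply Rplus_le_compat; [exact H4| exact H5]]
    | exact H6]|].
  replace ((A * (HR * Rpower (u - s) (1 / 2 + 2 * kappa)) + A * lam * (u - s) * B) * (HX * Rpower (t - u) (1 / 2 - kappa)) +
   (A * (HY1 * Rpower (u - s) (3 * kappa)) + A * lam * (u - s) * N1) * (HXX * Rpower (t - u) (1 - 2 * kappa)))
  with (A * (HR * HX * (Rpower (u - s) (1/2 + 2 * kappa) * Rpower (t - u) (1/2 - kappa))
         + lam * B * HX * ((u - s) * Rpower (t - u) (1/2 - kappa))
         + HY1 * HXX * (Rpower (u - s) (3 * kappa) * Rpower (t - u) (1 - 2 * kappa))
         + lam * N1 * HXX * ((u - s) * Rpower (t - u) (1 - 2 * kappa)))) by ring.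
  apply Rmult_le_compat_l; auto.
  repeat apply Rplus_le_compat; apply Rmult_le_compat_l; auto;
    repeat apply Rmult_le_pos; lra.
Qed.

Definition thk (kappa : R) := 1 + Rmin kappa (1/2 - kappa).

Lemma thk_prop : forall kappa, 0 < kappa < 1/2 ->
  1 < thk kappa /\ thk kappa <= 1 + kappa /\ thk kappa <= 1 + (1/2 - kappa).
Proof.
  intros k Hk. unfold thk. pose proof (Rmin_l k (1/2 - k)). pose proof (Rmin_r k (1/2 - k)).
  assert (0 < Rmin k (1/2 - k)) by (apply Rmin_glb_lt; lra). lra.
Qed.

Definition Kf (kappa lam HX HXX HR HY1 N1 A B l : R) :=
  A * (HR * HX * Rpower l ((1/2 + 2 * kappa) + (1/2 - kappa) - thk kappa)
       + lam * B * HX * Rpower l (1 + (1/2 - kappa) - thk kappa)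
       + HY1 * HXX * Rpower l (3 * kappa + (1 - 2 * kappa) - thk kappa)
       + lam * N1 * HXX * Rpower l (1 + (1 - 2 * kappa) - thk kappa)).

Lemma Kf_nonneg : forall kappa lam HX HXX HR HY1 N1 A B l,
  0 <= lam -> 0 <= HX -> 0 <= HXX -> 0 <= HR -> 0 <= HY1 -> 0 <= N1 -> 0 <= A -> 0 <= B ->
  0 <= Kf kappa lam HX HXX HR HY1 N1 A B l.
Proof.
  intros. unfold Kf. apply Rmult_le_pos; auto.
  repeat apply Rplus_le_le_0_compat; repeat apply Rmult_le_pos; auto; left; apply Rpower_pos'.
Qed.

Lemma Kf_mul : forall kappa lam HX HXX HR HY1 N1 A B l, 0 < l ->
  Kf kappa lam HX HXX HR HY1 N1 A B l * Rpower l (thk kappa) =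
  A * (HR * HX * Rpower l ((1/2 + 2 * kappa) + (1/2 - kappa))
       + lam * B * HX * Rpower l (1 + (1/2 - kappa))
       + HY1 * HXX * Rpower l (3 * kappa + (1 - 2 * kappa))
       + lam * N1 * HXX * Rpower l (1 + (1 - 2 * kappa))).
Proof.
  intros. unfold Kf.
  assert (E : forall e, Rpower l (e - thk kappa) * Rpower l (thk kappa) = Rpower l e).
  { intros e. rewrite <- Rpower_plus. f_equal. ring. }
  rewrite <- (E ((1/2 + 2 * kappa) + (1/2 - kappa))), <- (E (1 + (1/2 - kappa))),
    <- (E (3 * kappa + (1 - 2 * kappa))), <- (E (1 + (1 - 2 * kappa))). ring.
Qed.

Lemma dXi_th : forall kappa lam f X XX Y Y' HX HXX HR HY1 N1 A B l s u t,
  0 < kappa < 1/2 -> 0 < lam -> is_C1 f -> rough_path X XX ->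
  (forall x y, 0 <= x <= 2 * PI -> 0 <= y <= 2 * PI ->
     Rabs (X y - X x) <= HX * Rpower (Rabs (y - x)) (1/2 - kappa)) ->
  (forall x y, 0 <= x < 2 * PI -> x < y -> y < x + 2 * PI ->
     Rabs (XX x y) <= HXX * Rpower (y - x) (1 - 2 * kappa)) ->
  (forall x y, 0 <= x < 2 * PI -> x < y -> y < x + 2 * PI ->
     Rabs (remainder X Y Y' x y) <= HR * Rpower (y - x) (1/2 + 2 * kappa)) ->
  (forall x y, 0 <= x < 2 * PI -> 0 <= y < 2 * PI ->
     Rabs (delta Y' x y) <= HY1 * Rpower (Rabs (x - y)) (3 * kappa)) ->
  (forall x, 0 <= x < 2 * PI -> Rabs (Y' x) <= N1) ->
  0 <= HX -> 0 <= HXX -> 0 <= HR -> 0 <= HY1 ->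
  0 <= s -> s < u -> u < t -> t <= 2 * PI -> t - s <= l -> l <= 1 ->
  (forall z, s <= z <= t -> Rabs (f (lam * z)) <= A /\ Rabs (Derive f (lam * z)) <= A) ->
  Rabs (Y u) <= B ->
  Rabs (dXi (XiF lam f X XX Y Y') s u t) <=
    Kf kappa lam HX HXX HR HY1 N1 A B l * Rpower (t - s) (thk kappa).
Proof.
  intros kappa lam f X XX Y Y' HX HXX HR HY1 N1 A B l s u t Hk Hlam Hf Hrp hX hXX hR hY1 hN
    HX0 HXX0 HR0 HY10 Hs Hsu Hut Ht Hts Hl HA HB.
  eapply Rle_trans; [eapply dXi_bd; eauto; lra|].
  assert (HA0 : 0 <= A) by (pose proof (Rabs_pos (f (lam * s))); destruct (HA s ltac:(lra)); lra).
  assert (HB0 : 0 <= B) by (pose proof (Rabs_pos (Y u)); lra).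
  assert (HN0 : 0 <= N1) by (pose proof (Rabs_pos (Y' s)); pose proof (hN s ltac:(lra)); lra).
  destruct (thk_prop kappa Hk) as [T1 [T2 T3]].
  assert (S : forall e, thk kappa <= e -> Rpower (t - s) e <= Rpower (t - s) (thk kappa) * Rpower l (e - thk kappa)).
  { intros e He. apply pow_split; auto; lra. }
  unfold Kf. rewrite (Rmult_assoc A _ (Rpower (t - s) (thk kappa))). apply Rmult_le_compat_l; auto.
  set (P := Rpower (t - s) (thk kappa)).
  assert (C1 := S ((1/2 + 2 * kappa) + (1/2 - kappa)) ltac:(lra)).
  assert (C2 := S (1 + (1/2 - kappa)) ltac:(lra)).
  assert (C3 := S (3 * kappa + (1 - 2 * kappa)) ltac:(lra)).
  assert (C4 := S (1 + (1 - 2 * kappa)) ltac:(lra)).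
  assert (D1 : 0 <= HR * HX) by (apply Rmult_le_pos; auto).
  assert (D2 : 0 <= lam * B * HX) by (repeat apply Rmult_le_pos; lra).
  assert (D3 : 0 <= HY1 * HXX) by (apply Rmult_le_pos; auto).
  assert (D4 : 0 <= lam * N1 * HXX) by (repeat apply Rmult_le_pos; lra).
  apply (Rmult_le_compat_l _ _ _ D1) in C1.
  apply (Rmult_le_compat_l _ _ _ D2) in C2.
  apply (Rmult_le_compat_l _ _ _ D3) in C3.
  apply (Rmult_le_compat_l _ _ _ D4) in C4.
  match goal with |- _ <= ?R => 
   replace R with (HR * HX * (P * Rpower l ((1/2 + 2 * kappa) + (1/2 - kappa) - thk kappa)) +
     lam * B * HX * (P * Rpower l (1 + (1/2 - kappa) - thk kappa)) +
     HY1 * HXX * (P * Rpower l (3 * kappa + (1 - 2 * kappa) - thk kappa)) +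
     lam * N1 * HXX * (P * Rpower l (1 + (1 - 2 * kappa) - thk kappa))) by (unfold P; ring) end.
  unfold P in *. lra.
Qed.

Definition Cth (kappa : R) := Rpower 2 (thk kappa) * (1 + / (thk kappa - 1)).

Lemma block_err : forall kappa lam f X XX Y Y' HX HXX HR HY1 N1 A B l a b,
  0 < kappa < 1/2 -> 0 < lam -> is_C1 f -> rough_path X XX ->
  (forall x y, 0 <= x <= 2 * PI -> 0 <= y <= 2 * PI ->
     Rabs (X y - X x) <= HX * Rpower (Rabs (y - x)) (1/2 - kappa)) ->
  (forall x y, 0 <= x < 2 * PI -> x < y -> y < x + 2 * PI ->
     Rabs (XX x y) <= HXX * Rpower (y - x) (1 - 2 * kappa)) ->
  (forall x y, 0 <= x < 2 * PI -> x < y -> y < x + 2 * PI ->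
     Rabs (remainder X Y Y' x y) <= HR * Rpower (y - x) (1/2 + 2 * kappa)) ->
  (forall x y, 0 <= x < 2 * PI -> 0 <= y < 2 * PI ->
     Rabs (delta Y' x y) <= HY1 * Rpower (Rabs (x - y)) (3 * kappa)) ->
  (forall x, 0 <= x < 2 * PI -> Rabs (Y' x) <= N1) ->
  0 <= HX -> 0 <= HXX -> 0 <= HR -> 0 <= HY1 -> 0 <= N1 -> 0 <= A -> 0 <= B ->
  0 <= a -> a < b -> b <= 2 * PI -> b - a <= l -> l <= 1 ->
  (forall z, a <= z <= b -> Rabs (f (lam * z)) <= A /\ Rabs (Derive f (lam * z)) <= A) ->
  (forall u, a < u < b -> Rabs (Y u) <= B) ->
  forall l', incr a l' b ->
  Rabs (Ssum (XiF lam f X XX Y Y') a l' - XiF lam f X XX Y Y' a b) <=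
    Cth kappa * (A * (HR * HX * Rpower l ((1/2 + 2 * kappa) + (1/2 - kappa))
       + lam * B * HX * Rpower l (1 + (1/2 - kappa))
       + HY1 * HXX * Rpower l (3 * kappa + (1 - 2 * kappa))
       + lam * N1 * HXX * Rpower l (1 + (1 - 2 * kappa)))).
Proof.
  intros kappa lam f X XX Y Y' HX HXX HR HY1 N1 A B l a b Hk Hlam Hf Hrp hX hXX hR hY1 hN
    HX0 HXX0 HR0 HY10 HN0 HA0 HB0 Ha Hab Hb Hbl Hl HA HB l' Hinc.
  destruct (thk_prop kappa Hk) as [T1 [T2 T3]].
  set (K := Kf kappa lam HX HXX HR HY1 N1 A B l).
  assert (HK : 0 <= K) by (apply Kf_nonneg; lra).
  eapply Rle_trans; [apply (maxineq' _ (thk kappa) K a b T1 HK Hab); auto|].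
  { intros s u t Hs Hsu Hut Ht. unfold K. eapply dXi_th; eauto; try lra.
    - intros z Hz; apply HA; lra.
    - apply HB; lra. }
  rewrite <- Kf_mul by lra. fold K. unfold Cth.
  replace (2 * (b - a)) with (2 * (b - a)) by ring.
  rewrite <- Rpower_mult_distr by lra.
  assert (Rpower (b - a) (thk kappa) <= Rpower l (thk kappa)) by (apply Rle_Rpower_l; lra).
  assert (0 < Rpower 2 (thk kappa)) by apply Rpower_pos'.
  assert (0 < 1 + / (thk kappa - 1)) by (assert (0 < / (thk kappa - 1)) by (apply Rinv_0_lt_compat; lra); lra).
  replace (Rpower 2 (thk kappa) * (1 + / (thk kappa - 1)) * (K * Rpower l (thk kappa)))
    with (K * (Rpower 2 (thk kappa) * Rpower l (thk kappa)) * (1 + / (thk kappa - 1))) by ring.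
  apply Rmult_le_compat_r; [lra|]. apply Rmult_le_compat_l; auto.
  apply Rmult_le_compat_l; lra.
Qed.

Lemma part_list (Xi : R -> R -> R) (t : nat -> R) : forall n k,
  (forall i, (k <= i < k + n)%nat -> t i < t (S i)) ->
  incr (t k) (map t (seq (S k) n)) (t (k + n)%nat) /\
  Ssum Xi (t k) (map t (seq (S k) n)) = rsum (fun i => Xi (t (k + i)%nat) (t (S (k + i)))) n.
Proof.
  induction n as [|n IH]; intros k H.
  - simpl. rewrite Nat.add_0_r. split; auto.
  - destruct (IH (S k)) as [H1 H2]; [intros; apply H; lia|].
    replace (S k + n)%nat with (k + S n)%nat in H1 by lia.
    change (map t (seq (S k) (S n))) with (t (S k) :: map t (seq (S (S k)) n)).
    cbn [Ssum incr]. split.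
    + split; auto. apply H; lia.
    + rewrite H2, rsum_shift. rewrite Nat.add_0_r. f_equal.
      apply rsum_ext. intros i _. f_equal; f_equal; lia.
Qed.

Lemma part_gaps (t : nat -> R) (d : R) : forall n k,
  (forall i, (k <= i < k + n)%nat -> t (S i) - t i <= d) ->
  gaps d (t k) (map t (seq (S k) n)).
Proof.
  induction n as [|n IH]; intros k H; simpl; auto.
  split; [apply H; lia| apply IH; intros; apply H; lia].
Qed.

Lemma nat_arch : forall r, exists N : nat, r < INR N.
Proof. intros r. destruct (INR_unbounded r) as [n Hn]. exists n; lra. Qed.

Lemma M_exists : forall r, 0 < r -> exists M : nat, (1 <= M)%nat /\ INR M - 1 < r /\ r <= INR M.
Proof.
  intros r Hr. destruct (nat_arch r) as [n Hn].
  assert (H : forall n, r <= INR n -> exists M : nat, (1 <= M)%nat /\ INR M - 1 < r /\ r <= INR M).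
  { induction n0 as [|m IH]; intros Hm.
    - simpl in Hm; lra.
    - destruct (Rle_dec r (INR m)) as [Hle|Hgt]; [apply IH; auto|].
      exists (S m). rewrite S_INR in *. split; [lia|]. lra. }
  apply (H n); lra.
Qed.

Lemma rsum_const : forall c n, rsum (fun _ => c) n = INR n * c.
Proof. intros c n; induction n as [|n IH]; simpl rsum; [simpl; ring|]. rewrite IH, S_INR; ring. Qed.

Lemma rsum_abs : forall g n, Rabs (rsum g n) <= rsum (fun i => Rabs (g i)) n.
Proof.
  intros g n; induction n as [|n IH]; simpl; [rewrite Rabs_R0; lra|].
  eapply Rle_trans; [apply Rabs_triang|]. lra.
Qed.

Lemma tail_small : forall c q eps, 0 < c -> 0 < q -> 0 < eps ->
  exists M0 : nat, forall M : nat, (M0 <= M)%nat -> (1 <= M)%nat ->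
    INR M * Rpower (c / INR M) (1 + q) < eps.
Proof.
  intros c q eps Hc Hq He.
  set (e' := eps / Rpower c (1 + q)).
  assert (He' : 0 < e') by (unfold e'; apply Rdiv_lt_0_compat; auto; apply Rpower_pos').
  destruct (nat_arch (exp (- ln e' / q))) as [M0 HM0].
  exists M0. intros M HM HM1.
  assert (HMpos : 0 < INR M) by (apply lt_0_INR; lia).
  assert (HMge : INR M0 <= INR M) by (apply le_INR; auto).
  unfold Rdiv. rewrite <- Rpower_mult_distr by (try apply Rinv_0_lt_compat; lra).
  rewrite Rpower_inv_base by lra.
  assert (E : INR M * Rpower (INR M) (- (1 + q)) = Rpower (INR M) (- q)).
  { rewrite <- (Rpower_1 (INR M)) at 1 by lra. rewrite <- Rpower_plus. f_equal. ring. }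
  replace (INR M * (Rpower c (1 + q) * Rpower (INR M) (- (1 + q)))) with
    (Rpower c (1 + q) * (INR M * Rpower (INR M) (- (1 + q)))) by ring.
  rewrite E.
  assert (Rpower (INR M) (- q) < e').
  { unfold Rpower. rewrite <- (exp_ln e') by auto. apply exp_increasing.
    assert (exp (- ln e' / q) < INR M) by lra.
    apply ln_increasing in H; [|apply exp_pos]. rewrite ln_exp in H.
    apply Rmult_lt_reg_r with (/ q); [apply Rinv_0_lt_compat; auto|].
    replace (- q * ln (INR M) * / q) with (- ln (INR M)) by (field; lra).
    unfold Rdiv in H. lra. }
  assert (0 < Rpower c (1 + q)) by apply Rpower_pos'.
  unfold e' in H. apply Rmult_lt_compat_l with (r := Rpower c (1 + q)) in H; auto.
  replace (Rpower c (1 + q) * (eps / Rpower c (1 + q))) with eps in H by (field; lra). auto.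
Qed.

Definition unif (M : nat) (i : nat) : R := INR i * (2 * PI / INR M).

Lemma unif_step : forall M i, (1 <= M)%nat -> unif M (S i) - unif M i = 2 * PI / INR M.
Proof. intros. unfold unif. rewrite S_INR. ring. Qed.

Lemma unif_pos : forall M, (1 <= M)%nat -> 0 < 2 * PI / INR M.
Proof.
  intros. apply Rdiv_lt_0_compat; [apply Rgt_2PI_0| apply lt_0_INR; lia].
Qed.

Lemma unif_0 : forall M, unif M 0 = 0.
Proof. intros; unfold unif; simpl; ring. Qed.

Lemma unif_M : forall M, (1 <= M)%nat -> unif M M = 2 * PI.
Proof. intros. unfold unif. field. apply not_0_INR. lia. Qed.

Lemma unif_small : forall M, (8 <= M)%nat -> 2 * PI / INR M <= 1.
Proof.
  intros M HM. assert (8 <= INR M) by (replace 8 with (INR 8) by (simpl; ring); apply le_INR; auto).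
  pose proof PI_4. apply Rmult_le_reg_r with (INR M); [lra|].
  unfold Rdiv. rewrite Rmult_assoc, Rinv_l by lra. lra.
Qed.

Lemma pow_le_self : forall x th, 0 < x -> x <= 1 -> 1 <= th -> Rpower x th <= x.
Proof.
  intros x th Hx Hx1 Hth. replace th with (1 + (th - 1)) by ring. rewrite Rpower_plus, Rpower_1 by auto.
  pose proof (Rle_Rpower_l x 1 (th - 1) ltac:(lra) ltac:(lra)) as HP. rewrite Rpower_1_base in HP.
  nra.
Qed.

Definition Useq (Xi : R -> R -> R) (M : nat) : R := rsum (fun i => Xi (unif M i) (unif M (S i))) M.

Lemma cmp_unif (Xi : R -> R -> R) (th Kg : R) :
  1 < th -> 0 <= Kg ->
  (forall s u t, 0 <= s -> s < u -> u < t -> t <= 2 * PI -> t - s <= 1 ->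
     Rabs (dXi Xi s u t) <= Kg * Rpower (t - s) th) ->
  forall M d l, (8 <= M)%nat -> 0 < d -> d <= 1 -> incr 0 l (2 * PI) -> gaps d 0 l ->
  Rabs (Ssum Xi 0 l - Useq Xi M) <=
    INR M * (Kg * d) + INR M * (Kg * Rpower (2 * (2 * PI / INR M)) th * (1 + / (th - 1))).
Proof.
  intros Hth HKg H M d l HM Hd Hd1 Hinc Hg.
  assert (HM1 : (1 <= M)%nat) by lia.
  assert (Hu := unif_pos M HM1). assert (Hs := unif_small M HM).
  rewrite <- (rsum_const (Kg * Rpower (2 * (2 * PI / INR M)) th * (1 + / (th - 1))) M).
  unfold Useq.
  assert (B := blocks Xi d (Kg * d) (fun _ => Kg * Rpower (2 * (2 * PI / INR M)) th * (1 + / (th - 1))) (unif M)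
     ltac:(apply Rmult_le_pos; lra) M 0%nat l).
  rewrite unif_0 in B. simpl plus in B. rewrite unif_M in B by auto.
  apply B; auto.
  - intros i _. pose proof (unif_step M i HM1). lra.
  - intros i Hi l' Hl'. rewrite <- (unif_step M i HM1).
    apply maxineq'; auto.
    + pose proof (unif_step M i HM1); lra.
    + intros s u t Hs1 Hsu Hut Ht. apply H; try lra.
      * unfold unif in Hs1. pose proof (pos_INR i). 
        assert (0 <= INR i * (2 * PI / INR M)) by (apply Rmult_le_pos; lra). lra.
      * assert (unif M (S i) <= 2 * PI).
        { rewrite <- (unif_M M HM1). unfold unif. apply Rmult_le_compat_r; [lra|]. apply le_INR.
          lia. }
        lra.
      * pose proof (unif_step M i HM1); lra.
  - intros s u t Hs1 Hsu Hut Ht Htd. eapply Rle_trans; [apply H; lra|].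
    apply Rmult_le_compat_l; auto. eapply Rle_trans; [apply pow_le_self; lra|]. auto.
Qed.

Lemma part_props (Xi : R -> R -> R) : forall n t d, partition_mesh n t d ->
  incr 0 (map t (seq 1 n)) (2 * PI) /\ gaps d 0 (map t (seq 1 n)) /\
  Ssum Xi 0 (map t (seq 1 n)) = rsum (fun i => Xi (t i) (t (S i))) n.
Proof.
  intros n t d [Hn [H0 [HN H]]].
  destruct (part_list Xi t n 0) as [H1 H2]; [intros i Hi; apply H; lia|].
  rewrite H0 in H1, H2. rewrite Nat.add_0_l in H1. rewrite HN in H1.
  split; auto. split.
  - rewrite <- H0. apply part_gaps. intros i Hi. destruct (H i ltac:(lia)); lra.
  - rewrite H2. apply rsum_ext. intros; reflexivity.
Qed.

Lemma unif_props (Xi : R -> R -> R) : forall K, (1 <= K)%nat ->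
  incr 0 (map (unif K) (seq 1 K)) (2 * PI) /\ gaps (2 * PI / INR K) 0 (map (unif K) (seq 1 K)) /\
  Ssum Xi 0 (map (unif K) (seq 1 K)) = Useq Xi K.
Proof.
  intros K HK.
  destruct (part_list Xi (unif K) K 0) as [H1 H2].
  { intros i Hi. pose proof (unif_step K i HK). pose proof (unif_pos K HK). lra. }
  rewrite unif_0 in H1, H2. rewrite Nat.add_0_l in H1. rewrite unif_M in H1 by auto.
  split; auto. split.
  - rewrite <- (unif_0 K). apply part_gaps. intros i Hi. rewrite unif_step by auto. lra.
  - rewrite H2. unfold Useq. apply rsum_ext. intros; reflexivity.
Qed.

Lemma good_M : forall th Kg e, 1 < th -> 0 <= Kg -> 0 < e ->
  exists M, (8 <= M)%nat /\
    INR M * (Kg * Rpower (2 * (2 * PI / INR M)) th * (1 + / (th - 1))) < e.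
Proof.
  intros th Kg e Hth HKg He.
  set (Cq := 1 + / (th - 1)).
  assert (HCq : 0 < Cq) by (unfold Cq; assert (0 < / (th - 1)) by (apply Rinv_0_lt_compat; lra); lra).
  destruct (tail_small (4 * PI) (th - 1) (e / (Kg * Cq + 1))) as [M0 HM0].
  { pose proof PI_RGT_0. lra. } { lra. }
  { apply Rdiv_lt_0_compat; auto. assert (0 <= Kg * Cq) by (apply Rmult_le_pos; lra). lra. }
  exists (Nat.max M0 8). split; [lia|].
  specialize (HM0 (Nat.max M0 8) ltac:(lia) ltac:(lia)).
  replace (1 + (th - 1)) with th in HM0 by ring.
  replace (4 * PI / INR (Nat.max M0 8)) with (2 * (2 * PI / INR (Nat.max M0 8))) in HM0 by (unfold Rdiv; ring).
  set (T := INR (Nat.max M0 8) * Rpower (2 * (2 * PI / INR (Nat.max M0 8))) th) in *.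
  replace (INR (Nat.max M0 8) * (Kg * Rpower (2 * (2 * PI / INR (Nat.max M0 8))) th * Cq)) with ((Kg * Cq) * T) by (unfold T; ring).
  assert (0 <= Kg * Cq) by (apply Rmult_le_pos; lra).
  assert (HT : 0 <= T) by (unfold T; apply Rmult_le_pos; [apply pos_INR| left; apply Rpower_pos']).
  apply Rmult_lt_compat_l with (r := Kg * Cq + 1) in HM0; [|lra].
  replace ((Kg * Cq + 1) * (e / (Kg * Cq + 1))) with e in HM0 by (field; lra).
  nra.
Qed.

Lemma exists_int (Xi : R -> R -> R) (th Kg : R) :
  1 < th -> 0 <= Kg ->
  (forall s u t, 0 <= s -> s < u -> u < t -> t <= 2 * PI -> t - s <= 1 ->
     Rabs (dXi Xi s u t) <= Kg * Rpower (t - s) th) ->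
  exists I, forall eps, 0 < eps -> exists d, 0 < d /\
    forall n t, partition_mesh n t d ->
      Rabs (rsum (fun i => Xi (t i) (t (S i))) n - I) < eps.
Proof.
  intros Hth HKg H.
  set (Cq := 1 + / (th - 1)).
  assert (CMP : forall M dd l, (8 <= M)%nat -> 0 < dd -> dd <= 1 -> incr 0 l (2 * PI) -> gaps dd 0 l ->
    Rabs (Ssum Xi 0 l - Useq Xi M) <= INR M * (Kg * dd) + INR M * (Kg * Rpower (2 * (2 * PI / INR M)) th * Cq)).
  { intros. apply cmp_unif; auto. }
  set (v := fun k => Useq Xi (k + 8)).
  assert (NEAR : forall M e, (8 <= M)%nat -> 0 < e -> exists N, forall k, (N <= k)%nat ->
     Rabs (v k - Useq Xi M) <= e + INR M * (Kg * Rpower (2 * (2 * PI / INR M)) th * Cq)).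
  { intros M e HM He.
    destruct (nat_arch (2 * PI * (INR M * Kg + 1) / e)) as [N HN].
    exists N. intros k Hk.
    assert (HK1 : (1 <= k + 8)%nat) by lia.
    destruct (unif_props Xi (k + 8) HK1) as [U1 [U2 U3]].
    unfold v. rewrite <- U3.
    assert (Hpos := unif_pos (k + 8) HK1).
    eapply Rle_trans; [apply (CMP M (2 * PI / INR (k + 8)) _ HM Hpos (unif_small (k + 8) ltac:(lia)) U1 U2)|].
    apply Rplus_le_compat_r.
    assert (HkN : INR N <= INR (k + 8)) by (apply le_INR; lia).
    assert (Hk8 : 0 < INR (k + 8)) by (apply lt_0_INR; lia).
    assert (2 * PI * (INR M * Kg + 1) / e < INR (k + 8)) by lra.
    assert (2 * PI * (INR M * Kg + 1) < e * INR (k + 8)).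
    { apply Rmult_lt_reg_r with (/ e); [apply Rinv_0_lt_compat; auto|].
      replace (e * INR (k + 8) * / e) with (INR (k + 8)) by (field; lra). auto. }
    assert (HMK : 0 <= INR M * Kg) by (apply Rmult_le_pos; [apply pos_INR| auto]).
    replace (INR M * (Kg * (2 * PI / INR (k + 8)))) with ((INR M * Kg) * (2 * PI) / INR (k + 8)) by (field; lra).
    apply Rmult_le_reg_r with (INR (k + 8)); auto.
    unfold Rdiv. rewrite Rmult_assoc, Rinv_l by lra.
    pose proof PI_RGT_0. nra. }
  assert (Hcauchy : ex_lim_seq_cauchy v).
  { intros eps. destruct eps as [eps Heps]. simpl.
    destruct (good_M th Kg (eps / 4) Hth HKg ltac:(lra)) as [M [HM HMt]].
    destruct (NEAR M (eps / 4) HM ltac:(lra)) as [N HN].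
    exists N. intros n m Hn Hm.
    specialize (HN n Hn) as H1. specialize (HN m Hm) as H2. fold Cq in HMt.
    replace (v n - v m) with ((v n - Useq Xi M) - (v m - Useq Xi M)) by ring.
    eapply Rle_lt_trans; [apply Rabs_triang|]. rewrite Rabs_Ropp. lra. }
  apply ex_lim_seq_cauchy_corr in Hcauchy. destruct Hcauchy as [I HI].
  apply is_lim_seq_Reals in HI.
  exists I. intros eps Heps.
  set (e8 := eps / 8).
  destruct (good_M th Kg e8 Hth HKg ltac:(unfold e8; lra)) as [M [HM HMt]]. fold Cq in HMt.
  destruct (NEAR M e8 HM ltac:(unfold e8; lra)) as [N HN].
  destruct (HI e8 ltac:(unfold e8; lra)) as [N' HN'].
  set (k := Nat.max N N').
  specialize (HN k ltac:(unfold k; lia)). specialize (HN' k ltac:(unfold k; lia)).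
  unfold R_dist in HN'.
  assert (HMK : 0 <= INR M * Kg) by (apply Rmult_le_pos; [apply pos_INR| auto]).
  exists (Rmin 1 (e8 / (INR M * Kg + 1))). split.
  { apply Rmin_glb_lt; [lra|]. apply Rdiv_lt_0_compat; [unfold e8; lra| lra]. }
  intros n t Hp.
  set (dd := Rmin 1 (e8 / (INR M * Kg + 1))).
  assert (Hdd0 : 0 < dd) by (apply Rmin_glb_lt; [lra|]; apply Rdiv_lt_0_compat; [unfold e8; lra| lra]).
  assert (Hdd1 : dd <= 1) by apply Rmin_l.
  assert (Hdd2 : dd <= e8 / (INR M * Kg + 1)) by apply Rmin_r.
  destruct (part_props Xi n t dd Hp) as [P1 [P2 P3]].
  assert (P2' : gaps dd 0 (map t (seq 1 n))) by auto.
  rewrite <- P3.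
  assert (C := CMP M dd _ HM Hdd0 Hdd1 P1 P2').
  assert (INR M * (Kg * dd) < e8).
  { assert (INR M * Kg * dd <= INR M * Kg * (e8 / (INR M * Kg + 1))) by (apply Rmult_le_compat_l; auto).
    assert (INR M * Kg * (e8 / (INR M * Kg + 1)) < e8).
    { apply Rmult_lt_reg_r with (INR M * Kg + 1); [lra|].
      replace (INR M * Kg * (e8 / (INR M * Kg + 1)) * (INR M * Kg + 1)) with (INR M * Kg * e8) by (field; lra).
      unfold e8. nra. }
    rewrite <- Rmult_assoc. lra. }
  replace (Ssum Xi 0 (map t (seq 1 n)) - I) with
    ((Ssum Xi 0 (map t (seq 1 n)) - Useq Xi M) - (v k - Useq Xi M) + (v k - I)) by ring.
  eapply Rle_lt_trans; [apply Rabs_triang|].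
  eapply Rle_lt_trans; [apply Rplus_le_compat_r; apply Rabs_triang|].
  rewrite Rabs_Ropp. unfold e8 in *. lra.
Qed.

Lemma alg : forall A B HX N1 HXX HR HY1 HY Y0 p r q1 q3 pe2 pe4 rho s Cth lam,
  0 <= A -> 0 <= HX -> 0 <= N1 -> 0 <= HXX -> 0 <= HR -> 0 <= HY1 -> 0 <= HY -> 0 <= Y0 ->
  0 <= p -> 0 <= r -> 0 <= Cth -> 0 <= rho ->
  q1 <= r -> q3 <= r -> lam * pe2 = p -> lam * pe4 = r -> B * p = Y0 * p + HY * rho * r ->
  rho <= s -> 1 <= s ->
  A * (B * HX * p + N1 * HXX * r) +
  Cth * (A * (HR * HX * q1 + lam * B * HX * pe2 + HY1 * HXX * q3 + lam * N1 * HXX * pe4))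
  <= (Cth + 1) * (s * A) * (p * Y0 * HX + r * (HY * HX + HXX * (HY1 + N1) + HR * HX)).
Proof.
  intros A B HX N1 HXX HR HY1 HY Y0 p r q1 q3 pe2 pe4 rho s Cth lam
    HA HHX HN1 HHXX HHR HHY1 HHY HY0 Hp Hr HC Hrho Hq1 Hq3 E2 E4 EB Hrs Hs.
  replace (A * (B * HX * p + N1 * HXX * r) +
    Cth * (A * (HR * HX * q1 + lam * B * HX * pe2 + HY1 * HXX * q3 + lam * N1 * HXX * pe4)))
  with (A * ((Cth + 1) * (HX * (B * p) + N1 * HXX * r) + Cth * (HR * HX * q1 + HY1 * HXX * q3))).
  2:{ replace (lam * B * HX * pe2) with (B * HX * (lam * pe2)) by ring.
      replace (lam * N1 * HXX * pe4) with (N1 * HXX * (lam * pe4)) by ring.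
      rewrite E2, E4. ring. }
  rewrite EB.
  replace ((Cth + 1) * (s * A) * (p * Y0 * HX + r * (HY * HX + HXX * (HY1 + N1) + HR * HX)))
    with (A * ((Cth + 1) * (s * (HX * (Y0 * p) + HX * HY * r + N1 * HXX * r) + s * (HR * HX * r + HY1 * HXX * r)))) by ring.
  apply Rmult_le_compat_l; auto.
  assert (T1 : HX * (Y0 * p + HY * rho * r) + N1 * HXX * r <= s * (HX * (Y0 * p) + HX * HY * r + N1 * HXX * r)).
  { assert (0 <= HX * (Y0 * p)) by (repeat apply Rmult_le_pos; auto).
    assert (0 <= N1 * HXX * r) by (repeat apply Rmult_le_pos; auto).
    assert (HX * HY * rho * r <= HX * HY * s * r).
    { apply Rmult_le_compat_r; auto. apply Rmult_le_compat_l; auto. apply Rmult_le_pos; auto. }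
    assert (0 <= HX * HY * r) by (repeat apply Rmult_le_pos; auto).
    assert (s * (HX * (Y0 * p) + HX * HY * r + N1 * HXX * r) =
      HX * (Y0 * p) + HX * HY * s * r + N1 * HXX * r + (s - 1) * (HX * (Y0 * p) + N1 * HXX * r)) by ring.
    assert (0 <= (s - 1) * (HX * (Y0 * p) + N1 * HXX * r)) by (apply Rmult_le_pos; lra).
    nra. }
  assert (T2 : HR * HX * q1 + HY1 * HXX * q3 <= s * (HR * HX * r + HY1 * HXX * r)).
  { assert (HR * HX * q1 <= HR * HX * r) by (apply Rmult_le_compat_l; auto; apply Rmult_le_pos; auto).
    assert (HY1 * HXX * q3 <= HY1 * HXX * r) by (apply Rmult_le_compat_l; auto; apply Rmult_le_pos; auto).
    assert (0 <= HR * HX * r + HY1 * HXX * r) by (apply Rplus_le_le_0_compat; repeat apply Rmult_le_pos; auto).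
    nra. }
  assert (0 <= s * (HR * HX * r + HY1 * HXX * r)) by (apply Rmult_le_pos; [lra| apply Rplus_le_le_0_compat; repeat apply Rmult_le_pos; auto]).
  nra.
Qed.

Lemma rsum_scal : forall c g n, rsum (fun i => c * g i) n = c * rsum g n.
Proof. intros c g n; induction n as [|n IH]; simpl; [ring|]. rewrite IH; ring. Qed.

Definition cblk (lam : R) (Ml : nat) (j : nat) : R := if (j <? Ml)%nat then INR j / lam else 2 * PI.

Lemma cblk_facts : forall lam Ml, 1 <= lam -> (1 <= Ml)%nat -> INR Ml - 1 < 2 * PI * lam ->
  2 * PI * lam <= INR Ml ->
  cblk lam Ml 0 = 0 /\ cblk lam Ml Ml = 2 * PI /\
  forall j, (j < Ml)%nat -> cblk lam Ml j = INR j / lam /\ 0 <= cblk lam Ml j /\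
    cblk lam Ml j < cblk lam Ml (S j) /\ cblk lam Ml (S j) - cblk lam Ml j <= / lam /\
    cblk lam Ml (S j) <= (INR j + 1) / lam /\ cblk lam Ml (S j) <= 2 * PI.
Proof.
  intros lam Ml Hl HM Ha Hb. unfold cblk.
  assert (Hlp : 0 < lam) by lra.
  split. { replace (0 <? Ml)%nat with true by (symmetry; apply Nat.ltb_lt; lia). simpl. unfold Rdiv; ring. }
  split. { replace (Ml <? Ml)%nat with false by (symmetry; apply Nat.ltb_ge; lia). auto. }
  intros j Hj. replace (j <? Ml)%nat with true by (symmetry; apply Nat.ltb_lt; lia).
  assert (HjM : INR j + 1 <= INR Ml) by (rewrite <- S_INR; apply le_INR; lia).
  assert (Hj0 : 0 <= INR j / lam) by (apply Rmult_le_pos; [apply pos_INR| left; apply Rinv_0_lt_compat; lra]).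
  assert (Hjl : INR j / lam < 2 * PI).
  { apply Rmult_lt_reg_r with lam; auto. unfold Rdiv. rewrite Rmult_assoc, Rinv_l by lra. lra. }
  split; auto. split; auto.
  destruct (S j <? Ml)%nat eqn:E.
  - apply Nat.ltb_lt in E. rewrite S_INR.
    assert (HjM' : INR j + 1 + 1 <= INR Ml) by (rewrite <- !S_INR; apply le_INR; lia).
    assert (((INR j + 1) / lam) - INR j / lam = / lam) by (field; lra).
    assert (0 < / lam) by (apply Rinv_0_lt_compat; lra).
    repeat split; try lra.
    apply Rmult_le_reg_r with lam; auto. unfold Rdiv. rewrite Rmult_assoc, Rinv_l by lra. lra.
  - apply Nat.ltb_ge in E. assert (Ml = S j) by lia. subst Ml. rewrite S_INR in *.
    repeat split; try lra.
    + replace (2 * PI - INR j / lam) with ((2 * PI * lam - INR j) / lam) by (field; lra).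
      assert (H' : (2 * PI * lam - INR j) * / lam <= 1 * / lam) by (apply Rmult_le_compat_r; [left; apply Rinv_0_lt_compat; lra| lra]).
      unfold Rdiv. lra.
    + apply Rmult_le_reg_r with lam; auto. replace ((INR j + 1) / lam * lam) with (INR j + 1) by (field; lra). lra.
Qed.

Lemma lam_bound : forall kappa lam f X XX Y Y' HX HXX HR HY1 N1 HY T Kg,
  0 < kappa < 1/2 -> 1 <= lam -> is_C1 f -> rough_path X XX ->
  (forall x y, 0 <= x <= 2 * PI -> 0 <= y <= 2 * PI ->
     Rabs (X y - X x) <= HX * Rpower (Rabs (y - x)) (1/2 - kappa)) ->
  (forall x y, 0 <= x < 2 * PI -> x < y -> y < x + 2 * PI ->
     Rabs (XX x y) <= HXX * Rpower (y - x) (1 - 2 * kappa)) ->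
  (forall x y, 0 <= x < 2 * PI -> x < y -> y < x + 2 * PI ->
     Rabs (remainder X Y Y' x y) <= HR * Rpower (y - x) (1/2 + 2 * kappa)) ->
  (forall x y, 0 <= x < 2 * PI -> 0 <= y < 2 * PI ->
     Rabs (delta Y' x y) <= HY1 * Rpower (Rabs (x - y)) (3 * kappa)) ->
  (forall x, 0 <= x < 2 * PI -> Rabs (Y' x) <= N1) ->
  (forall u, 0 < u < 2 * PI -> Rabs (Y u - Y 0) <= HY * Rpower u (1/2 - kappa)) ->
  0 <= HX -> 0 <= HXX -> 0 <= HR -> 0 <= HY1 -> 0 <= N1 -> 0 <= HY -> 0 <= Kg ->
  (forall M, rsum (fun n => sqrt (1 + INR n) * loc_sup f (Z.of_nat n)) M <= T) ->
  (forall s u t, 0 <= s -> s < u -> u < t -> t <= 2 * PI -> t - s <= 1 ->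
     Rabs (dXi (XiF lam f X XX Y Y') s u t) <= Kg * Rpower (t - s) (thk kappa)) ->
  exists Ml : nat, forall l d, 0 < d -> d <= 1 -> incr 0 l (2 * PI) -> gaps d 0 l ->
    Rabs (Ssum (XiF lam f X XX Y Y') 0 l) <=
      (Cth kappa + 1) * T * (Rpower lam (kappa - 1/2) * Rabs (Y 0) * HX +
         Rpower lam (2 * kappa - 1) * (HY * HX + HXX * (HY1 + N1) + HR * HX))
      + INR Ml * (Kg * d).
Proof.
  intros kappa lam f X XX Y Y' HX HXX HR HY1 N1 HY T Kg Hk Hl Hf Hrp hX hXX hR hY1 hN hY
    HX0 HXX0 HR0 HY10 HN0 HY0 HKg hT hKg.
  assert (Hlp : 0 < lam) by lra.
  assert (HPI := twoPI_gt1).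
  destruct (M_exists (2 * PI * lam)) as [Ml [HM1 [HMa HMb]]]; [nra|].
  exists Ml. intros l d Hd Hd1 Hinc Hg.
  destruct (cblk_facts lam Ml Hl HM1 HMa HMb) as [C0 [CM CJ]].
  set (c := cblk lam Ml) in *. clearbody c.
  destruct (thk_prop kappa Hk) as [T1 [T2 T3]].
  set (al := 1/2 - kappa).
  set (p := Rpower lam (kappa - 1/2)).
  set (r := Rpower lam (2 * kappa - 1)).
  set (Aj := fun j : nat => loc_sup f (Z.of_nat j)).
  set (Bj := fun j : nat => Rabs (Y 0) + HY * Rpower ((INR j + 1) / lam) al).
  set (ell := / lam) in *.
  assert (Hell : 0 < ell) by (apply Rinv_0_lt_compat; lra).
  assert (Hell1 : ell <= 1) by (unfold ell; rewrite <- Rinv_1; apply Rinv_le_contravar; lra).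
  set (Eb := fun j : nat => Cth kappa * (Aj j * (HR * HX * Rpower ell ((1/2 + 2 * kappa) + (1/2 - kappa))
       + lam * Bj j * HX * Rpower ell (1 + (1/2 - kappa))
       + HY1 * HXX * Rpower ell (3 * kappa + (1 - 2 * kappa))
       + lam * N1 * HXX * Rpower ell (1 + (1 - 2 * kappa))))).
  assert (HAj : forall j, (j < Ml)%nat -> forall z, c j <= z <= c (S j) ->
            Rabs (f (lam * z)) <= Aj j /\ Rabs (Derive f (lam * z)) <= Aj j).
  { intros j Hj z Hz. destruct (CJ j Hj) as [E1 [E2 [E3 [E4 [E5 E6]]]]].
    assert (Hz1 : INR j <= lam * z).
    { rewrite E1 in Hz. apply Rmult_le_reg_r with (/ lam); [apply Rinv_0_lt_compat; lra|].
      replace (lam * z * / lam) with z by (field; lra). unfold Rdiv in Hz. lra. }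
    assert (Hz2 : lam * z <= INR j + 1).
    { apply Rmult_le_reg_r with (/ lam); [apply Rinv_0_lt_compat; lra|].
      replace (lam * z * / lam) with z by (field; lra). unfold Rdiv in E5. lra. }
    pose proof (loc_sup_bd f (Z.of_nat j) Hf (lam * z - INR j) ltac:(lra)) as HH.
    replace (IZR (Z.of_nat j) + (lam * z - INR j)) with (lam * z) in HH by (rewrite <- INR_IZR_INZ; ring).
    fold (Aj j) in HH. pose proof (Rabs_pos (f (lam * z))). pose proof (Rabs_pos (Derive f (lam * z))).
    split; lra. }
  assert (HAj0 : forall j, 0 <= Aj j) by (intros; apply loc_sup_nonneg; auto).
  assert (HBj0 : forall j, 0 <= Bj j).
  { intros. unfold Bj. pose proof (Rabs_pos (Y 0)). assert (0 <= HY * Rpower ((INR j + 1) / lam) al) by (apply Rmult_le_pos; auto; left; apply Rpower_pos'). lra. }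
  assert (HBj : forall j, (j < Ml)%nat -> forall u, c j <= u <= c (S j) -> u < 2 * PI -> Rabs (Y u) <= Bj j).
  { intros j Hj u Hu Hu2. destruct (CJ j Hj) as [E1 [E2 [E3 [E4 [E5 E6]]]]]. unfold Bj.
    assert (0 <= HY * Rpower ((INR j + 1) / lam) al) by (apply Rmult_le_pos; auto; left; apply Rpower_pos').
    destruct (Req_dec u 0) as [->|Hu0]; [lra|].
    replace (Y u) with (Y 0 + (Y u - Y 0)) by ring.
    eapply Rle_trans; [apply Rabs_triang|]. apply Rplus_le_compat_l.
    eapply Rle_trans; [apply hY; lra|]. apply Rmult_le_compat_l; auto.
    apply Rle_Rpower_l; [unfold al; lra| split; lra]. }
  assert (Hinc' : incr (c 0%nat) l (c (0 + Ml)%nat)) by (rewrite Nat.add_0_l, C0, CM; auto).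
  assert (Hg' : gaps d (c 0%nat) l) by (rewrite C0; auto).
  assert (BL := blocks (XiF lam f X XX Y Y') d (Kg * d) Eb c ltac:(apply Rmult_le_pos; lra) Ml 0%nat l).
  specialize (BL ltac:(intros i Hi; destruct (CJ i ltac:(lia)) as [_ [_ [E _]]]; exact E)).
  assert (HEb : forall i, (0 <= i < 0 + Ml)%nat -> forall l', incr (c i) l' (c (S i)) ->
     Rabs (Ssum (XiF lam f X XX Y Y') (c i) l' - XiF lam f X XX Y Y' (c i) (c (S i))) <= Eb i).
  { intros i Hi l' Hl'. rewrite Nat.add_0_l in Hi. destruct (CJ i ltac:(lia)) as [E1 [E2 [E3 [E4 [E5 E6]]]]].
    unfold Eb.
    apply (block_err kappa lam f X XX Y Y' HX HXX HR HY1 N1 (Aj i) (Bj i) ell (c i) (c (S i))); auto; try lra.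
    - intros z Hz; apply HAj; auto; lia.
    - intros u Hu; apply HBj; [lia| lra| lra]. }
  specialize (BL HEb).
  specialize (BL ltac:(intros s u t Hs Hsu Hut Ht Htd; rewrite C0 in Hs; rewrite Nat.add_0_l, CM in Ht;
     eapply Rle_trans; [apply hKg; lra|]; apply Rmult_le_compat_l; auto;
     eapply Rle_trans; [apply pow_le_self; lra| auto]) Hinc' Hg').
  simpl plus in BL.
  assert (PB : forall i, (i < Ml)%nat ->
     Rabs (XiF lam f X XX Y Y' (c i) (c (S i))) + Eb i <=
     (Cth kappa + 1) * (sqrt (1 + INR i) * Aj i) * (p * Rabs (Y 0) * HX + r * (HY * HX + HXX * (HY1 + N1) + HR * HX))).
  { intros i Hi. destruct (CJ i Hi) as [E1 [E2 [E3 [E4 [E5 E6]]]]].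
    assert (Hpow : forall e, Rpower ell e = Rpower lam (- e)) by (intros; unfold ell; apply Rpower_inv_base; lra).
    assert (Hp : Rpower ell al = p) by (rewrite Hpow; unfold p, al; f_equal; ring).
    assert (Hr : Rpower ell (1 - 2 * kappa) = r) by (rewrite Hpow; unfold r; f_equal; ring).
    assert (HXi : Rabs (XiF lam f X XX Y Y' (c i) (c (S i))) <= Aj i * (Bj i * HX * p + N1 * HXX * r)).
    { unfold XiF.
      destruct (HAj i Hi (c i) ltac:(lra)) as [HA1 _].
      assert (HY1' : Rabs (Y (c i)) <= Bj i) by (apply HBj; auto; lra).
      assert (HN1' : Rabs (Y' (c i)) <= N1) by (apply hN; lra).
      assert (HdX : Rabs (delta X (c i) (c (S i))) <= HX * p).
      { unfold delta. eapply Rle_trans; [apply hX; lra|]. apply Rmult_le_compat_l; auto.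
        rewrite <- Hp. rewrite Rabs_right by lra. apply Rle_Rpower_l; [unfold al; lra| split; unfold ell; lra]. }
      assert (HXXb : Rabs (XX (c i) (c (S i))) <= HXX * r).
      { eapply Rle_trans; [apply hXX; lra|]. apply Rmult_le_compat_l; auto.
        rewrite <- Hr. apply Rle_Rpower_l; [lra| split; lra]. }
      eapply Rle_trans; [apply Rabs_triang|].
      replace (Aj i * (Bj i * HX * p + N1 * HXX * r)) with ((Aj i * Bj i) * (HX * p) + (Aj i * N1) * (HXX * r)) by ring.
      apply Rplus_le_compat; apply abs_mult_le; auto; apply abs_mult_le; auto. }
    eapply Rle_trans; [apply Rplus_le_compat_r; exact HXi|].
    unfold Eb.
    replace (sqrt (1 + INR i) * Aj i) with (sqrt (1 + INR i) * Aj i) by ring.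
    assert (Hrho : Rpower (INR i + 1) al <= sqrt (1 + INR i)).
    { rewrite Rplus_comm. assert (0 < 1 + INR i) by (pose proof (pos_INR i); lra).
      rewrite <- Rpower_sqrt by auto. apply Rle_Rpower; [pose proof (pos_INR i); lra| unfold al; lra]. }
    assert (Hs1 : 1 <= sqrt (1 + INR i)).
    { pose proof (sqrt_le_1_alt 1 (1 + INR i)) as Hq. rewrite sqrt_1 in Hq. apply Hq. pose proof (pos_INR i); lra. }
    apply (alg (Aj i) (Bj i) HX N1 HXX HR HY1 HY (Rabs (Y 0)) p r _ _ _ _ (Rpower (INR i + 1) al) (sqrt (1 + INR i)) (Cth kappa) lam); auto.
    - apply Rabs_pos.
    - unfold p; left; apply Rpower_pos'.
    - unfold r; left; apply Rpower_pos'.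
    - unfold Cth. assert (0 < / (thk kappa - 1)) by (apply Rinv_0_lt_compat; lra).
      apply Rmult_le_pos; [left; apply Rpower_pos'| lra].
    - left; apply Rpower_pos'.
    - rewrite Hpow. unfold r. apply Rle_Rpower; lra.
    - rewrite Hpow. unfold r. apply Rle_Rpower; lra.
    - rewrite Hpow. unfold p. rewrite <- (Rpower_1 lam) at 1 by lra. rewrite <- Rpower_plus. f_equal. ring.
    - rewrite Hpow. unfold r. rewrite <- (Rpower_1 lam) at 1 by lra. rewrite <- Rpower_plus. f_equal. ring.
    - unfold Bj. rewrite Rmult_plus_distr_r. f_equal.
      unfold Rdiv. rewrite <- Rpower_mult_distr by (try apply Rinv_0_lt_compat; pose proof (pos_INR i); lra).
      change (Rpower (/ lam) al) with (Rpower ell al). rewrite Hp.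
      assert (Hpp : p * p = r). { unfold p, r. rewrite <- Rpower_plus. f_equal. lra. }
      rewrite <- Hpp. ring. }
  set (W := p * Rabs (Y 0) * HX + r * (HY * HX + HXX * (HY1 + N1) + HR * HX)).
  assert (HW : 0 <= W).
  { unfold W. assert (0 <= p) by (left; apply Rpower_pos'). assert (0 <= r) by (left; apply Rpower_pos').
    pose proof (Rabs_pos (Y 0)).
    apply Rplus_le_le_0_compat; repeat (apply Rmult_le_pos || apply Rplus_le_le_0_compat); auto; lra. }
  assert (HC0 : 0 <= Cth kappa).
  { unfold Cth. assert (0 < / (thk kappa - 1)) by (apply Rinv_0_lt_compat; lra).
    apply Rmult_le_pos; [left; apply Rpower_pos'| lra]. }
  assert (SUM : rsum (fun i => Rabs (XiF lam f X XX Y Y' (c i) (c (S i)))) Ml + rsum Eb Ml <= (Cth kappa + 1) * T * W).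
  { assert (E : rsum (fun i => Rabs (XiF lam f X XX Y Y' (c i) (c (S i)))) Ml + rsum Eb Ml =
       rsum (fun i => Rabs (XiF lam f X XX Y Y' (c i) (c (S i))) + Eb i) Ml).
    { clear. induction Ml as [|M IH]; simpl; [ring|]. rewrite <- IH. ring. }
    rewrite E. eapply Rle_trans; [apply rsum_le; intros i Hi; apply PB; auto|].
    rewrite (rsum_ext _ (fun i => ((Cth kappa + 1) * W) * (sqrt (1 + INR i) * Aj i)) Ml) by (intros; unfold W; ring).
    rewrite rsum_scal. replace ((Cth kappa + 1) * T * W) with ((Cth kappa + 1) * W * T) by ring.
    apply Rmult_le_compat_l; [apply Rmult_le_pos; lra|]. apply hT. }
  pose proof (rsum_abs (fun i => XiF lam f X XX Y Y' (c i) (c (S i))) Ml) as RA.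
  replace (Ssum (XiF lam f X XX Y Y') 0 l) with
    ((Ssum (XiF lam f X XX Y Y') (c 0%nat) l - rsum (fun i => XiF lam f X XX Y Y' (c (0 + i)%nat) (c (S (0 + i)))) Ml)
     + rsum (fun i => XiF lam f X XX Y Y' (c i) (c (S i))) Ml) by (rewrite C0; simpl; ring).
  eapply Rle_trans; [apply Rabs_triang|].
  assert (rsum (fun i => Eb (0 + i)%nat) Ml = rsum Eb Ml) by reflexivity.
  fold W. lra.
Qed.

Theorem proposition3p8 :
  forall kappa : R, 0 < kappa < 1/2 ->
  exists C : R -> R,
  forall f : R -> R, is_C1 f -> is_finite (triple_norm f) ->
  forall lambda : R, 1 <= lambda ->
  forall (X : R -> R) (XX : R -> R -> R), rough_path X XX ->
  forall Y Y' : R -> R,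
    periodic Y -> periodic Y' ->
    (forall x, continuous Y x) -> (forall x, continuous Y' x) ->
    is_finite (holder (1/2 - kappa) X) ->
    is_finite (holder2 (1 - 2 * kappa) XX) ->
    is_finite (holder (1/2 - kappa) Y) ->
    is_finite (Cnorm (3 * kappa) Y') ->
    is_finite (holder2 (1/2 + 2 * kappa) (remainder X Y Y')) ->
  exists I : R,
    is_rough_integral X XX (fun x => f (lambda * x) * Y x)
                           (fun x => f (lambda * x) * Y' x) I /\
    Rabs I <= C (real (triple_norm f)) *
      (Rpower lambda (kappa - 1/2) * Rabs (Y 0) * real (holder (1/2 - kappa) X)
       + Rpower lambda (2 * kappa - 1) * Kkappa kappa X XX Y Y').
Proof.
  intros kappa Hk. exists (fun T => (Cth kappa + 1) * T).
  intros f Hf Hfin lam Hlam X XX Hrp Y Y' HpY HpY' HcY HcY' HfX HfXX HfY HfY' HfR.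
  assert (Hlp : 0 < lam) by lra.
  assert (HPI := twoPI_gt1).
  destruct (Cnorm_split (3 * kappa) Y' HfY') as [HfY1 [HfN EC]].
  set (HX := real (holder (1/2 - kappa) X)).
  set (HXX := real (holder2 (1 - 2 * kappa) XX)).
  set (HR := real (holder2 (1/2 + 2 * kappa) (remainder X Y Y'))).
  set (HY := real (holder (1/2 - kappa) Y)).
  set (HY1 := real (holder (3 * kappa) Y')).
  set (N1 := real (supnorm Y')).
  set (T := real (triple_norm f)).
  assert (HX0 : 0 <= HX) by (apply holder_nonneg; auto).
  assert (HXX0 : 0 <= HXX) by (apply holder2_nonneg; auto).
  assert (HR0 : 0 <= HR) by (apply holder2_nonneg; auto).
  assert (HY0 : 0 <= HY) by (apply holder_nonneg; auto).
  assert (HY10 : 0 <= HY1) by (apply holder_nonneg; auto).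
  assert (HN0 : 0 <= N1) by (eapply Rle_trans; [apply Rabs_pos| apply (supnorm_bd Y' 0 HfN); lra]).
  assert (HcX : forall x, continuous X x) by (destruct Hrp as [_ [H _]]; auto).
  assert (hX : forall x y, 0 <= x <= 2 * PI -> 0 <= y <= 2 * PI ->
     Rabs (X y - X x) <= HX * Rpower (Rabs (y - x)) (1/2 - kappa)).
  { intros; apply holder_closed; auto; lra. }
  assert (hXX : forall x y, 0 <= x < 2 * PI -> x < y -> y < x + 2 * PI ->
     Rabs (XX x y) <= HXX * Rpower (y - x) (1 - 2 * kappa)).
  { intros; apply holder2_bd; auto. }
  assert (hR : forall x y, 0 <= x < 2 * PI -> x < y -> y < x + 2 * PI ->
     Rabs (remainder X Y Y' x y) <= HR * Rpower (y - x) (1/2 + 2 * kappa)).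
  { intros; apply holder2_bd; auto. }
  assert (hY1 : forall x y, 0 <= x < 2 * PI -> 0 <= y < 2 * PI ->
     Rabs (delta Y' x y) <= HY1 * Rpower (Rabs (x - y)) (3 * kappa)).
  { intros; apply holder_bd; auto. }
  assert (hN : forall x, 0 <= x < 2 * PI -> Rabs (Y' x) <= N1).
  { intros; apply supnorm_bd; auto. }
  assert (hY : forall u, 0 < u < 2 * PI -> Rabs (Y u - Y 0) <= HY * Rpower u (1/2 - kappa)).
  { intros u Hu. pose proof (holder_bd (1/2 - kappa) Y 0 u HfY ltac:(lra) ltac:(lra)) as H.
    unfold delta in H. rewrite Rminus_0_l, Rabs_Ropp, (Rabs_right u) in H by lra. auto. }
  assert (hT : forall M, rsum (fun n => sqrt (1 + INR n) * loc_sup f (Z.of_nat n)) M <= T).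
  { intros; apply tn_bd; auto. }
  destruct (continuity_ab_maj (fun z => Rabs (f z) + Rabs (Derive f z)) 0 (2 * PI * lam)) as [Mx [HMx _]].
  { nra. } { intros; apply g_cont; auto. }
  set (G := Rabs (f Mx) + Rabs (Derive f Mx)).
  assert (HG : forall z, 0 <= z <= 2 * PI -> Rabs (f (lam * z)) <= G /\ Rabs (Derive f (lam * z)) <= G).
  { intros z Hz. assert (0 <= lam * z <= 2 * PI * lam) by (split; nra).
    specialize (HMx (lam * z) H). fold G in HMx.
    pose proof (Rabs_pos (f (lam * z))). pose proof (Rabs_pos (Derive f (lam * z))). split; lra. }
  set (BY := Rabs (Y 0) + HY * Rpower (2 * PI) (1/2 - kappa)).
  assert (HBY : forall u, 0 <= u < 2 * PI -> Rabs (Y u) <= BY).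
  { intros u Hu. unfold BY.
    assert (0 <= HY * Rpower (2 * PI) (1 / 2 - kappa)) by (apply Rmult_le_pos; auto; left; apply Rpower_pos').
    destruct (Req_dec u 0) as [->|Hu0]; [lra|].
    replace (Y u) with (Y 0 + (Y u - Y 0)) by ring.
    eapply Rle_trans; [apply Rabs_triang|]. apply Rplus_le_compat_l.
    eapply Rle_trans; [apply hY; lra|]. apply Rmult_le_compat_l; auto.
    apply Rle_Rpower_l; [lra| split; lra]. }
  assert (HG0 : 0 <= G) by (unfold G; pose proof (Rabs_pos (f Mx)); pose proof (Rabs_pos (Derive f Mx)); lra).
  assert (HBY0 : 0 <= BY) by (eapply Rle_trans; [apply Rabs_pos| apply (HBY 0); lra]).
  set (Kg := Kf kappa lam HX HXX HR HY1 N1 G BY 1).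
  assert (HKg : 0 <= Kg) by (apply Kf_nonneg; lra).
  destruct (thk_prop kappa Hk) as [T1 [T2 T3]].
  assert (hKg : forall s u t, 0 <= s -> s < u -> u < t -> t <= 2 * PI -> t - s <= 1 ->
     Rabs (dXi (XiF lam f X XX Y Y') s u t) <= Kg * Rpower (t - s) (thk kappa)).
  { intros s u t Hs Hsu Hut Ht Hts. unfold Kg.
    eapply dXi_th; eauto; try lra.
    - intros z Hz; apply HG; lra.
    - apply HBY; lra. }
  destruct (exists_int (XiF lam f X XX Y Y') (thk kappa) Kg T1 HKg hKg) as [I HI].
  destruct (lam_bound kappa lam f X XX Y Y' HX HXX HR HY1 N1 HY T Kg Hk Hlam Hf Hrp
      hX hXX hR hY1 hN hY HX0 HXX0 HR0 HY10 HN0 HY0 HKg hT hKg) as [Ml HMl].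
  exists I. split.
  { intros eps He. destruct (HI eps He) as [d [Hd H]]. exists d. split; auto. }
  unfold Kkappa. rewrite EC. fold HX HY HXX HR HY1 N1 T.
  set (W := Rpower lam (kappa - 1/2) * Rabs (Y 0) * HX +
         Rpower lam (2 * kappa - 1) * (HY * HX + HXX * (HY1 + N1) + HR * HX)).
  apply Rle_plus_epsilon. intros eps He.
  destruct (HI (eps / 2) ltac:(lra)) as [d [Hd Hconv]].
  set (dd := Rmin (Rmin d 1) (eps / (2 * (INR Ml * Kg + 1)))).
  assert (HMK : 0 <= INR Ml * Kg) by (apply Rmult_le_pos; [apply pos_INR| auto]).
  assert (Hdd0 : 0 < dd).
  { unfold dd. apply Rmin_glb_lt; [apply Rmin_glb_lt; lra|]. apply Rdiv_lt_0_compat; lra. }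
  destruct (nat_arch (2 * PI / dd)) as [K0 HK0].
  set (K := Nat.max K0 1).
  assert (HK1 : (1 <= K)%nat) by (unfold K; lia).
  assert (HKpos : 0 < INR K) by (apply lt_0_INR; lia).
  assert (HKK0 : INR K0 <= INR K) by (apply le_INR; unfold K; lia).
  assert (Hmesh : 2 * PI / INR K < dd).
  { apply Rmult_lt_reg_r with (INR K); auto.
    replace (2 * PI / INR K * INR K) with (2 * PI) by (field; lra).
    assert (2 * PI < dd * INR K0).
    { apply Rmult_lt_reg_r with (/ dd); [apply Rinv_0_lt_compat; auto|].
      replace (dd * INR K0 * / dd) with (INR K0) by (field; lra). unfold Rdiv in HK0. lra. }
    nra. }
  assert (Hdd1 : dd <= d) by (unfold dd; eapply Rle_trans; [apply Rmin_l| apply Rmin_l]).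
  assert (Hdd2 : dd <= 1) by (unfold dd; eapply Rle_trans; [apply Rmin_l| apply Rmin_r]).
  assert (Hdd3 : dd <= eps / (2 * (INR Ml * Kg + 1))) by (unfold dd; apply Rmin_r).
  assert (Hup := unif_pos K HK1).
  assert (Hpm : partition_mesh K (unif K) d).
  { split; auto. split; [apply unif_0|]. split; [apply unif_M; auto|].
    intros i Hi. pose proof (unif_step K i HK1). split; lra. }
  specialize (Hconv K (unif K) Hpm).
  destruct (unif_props (XiF lam f X XX Y Y') K HK1) as [U1 [U2 U3]].
  specialize (HMl _ (2 * PI / INR K) Hup ltac:(lra) U1 U2).
  assert (Hconv' : Rabs (Ssum (XiF lam f X XX Y Y') 0 (map (unif K) (seq 1 K)) - I) < eps / 2)
    by (rewrite U3; exact Hconv).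
  clear Hconv. rename Hconv' into Hconv.
  assert (INR Ml * (Kg * (2 * PI / INR K)) <= eps / 2).
  { assert (INR Ml * Kg * (2 * PI / INR K) <= INR Ml * Kg * (eps / (2 * (INR Ml * Kg + 1)))) by
      (apply Rmult_le_compat_l; auto; lra).
    assert (INR Ml * Kg * (eps / (2 * (INR Ml * Kg + 1))) <= eps / 2).
    { apply Rmult_le_reg_r with (2 * (INR Ml * Kg + 1)); [lra|].
      replace (INR Ml * Kg * (eps / (2 * (INR Ml * Kg + 1))) * (2 * (INR Ml * Kg + 1))) with (INR Ml * Kg * eps) by (field; lra).
      replace (eps / 2 * (2 * (INR Ml * Kg + 1))) with (eps * (INR Ml * Kg) + eps) by (field; lra).
      nra. }
    rewrite <- Rmult_assoc. lra. }
  replace I with (Ssum (XiF lam f X XX Y Y') 0 (map (unif K) (seq 1 K)) -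
      (Ssum (XiF lam f X XX Y Y') 0 (map (unif K) (seq 1 K)) - I)) by ring.
  eapply Rle_trans; [apply Rabs_triang|]. rewrite Rabs_Ropp.
  fold W in HMl. lra.
Qed.
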